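(* Let $k\in\mathbb{Z}$ and $z\in\mathbb{C}$ with $|z|\ge \left(\tfrac12+(2|k|+1)\pi\right)e^{-1/2}$ (in particular, this holds whenever $|z|\ge 4(|k|+1)$). Then $|W_k'(z)|\le \frac{1}{|z|}$.
   Context: $W_k$ denotes the $k$-th branch of the Lambert $W$ function (inverse of $w\mapsto we^w$) in the standard convention of Corless, Gonnet, Hare, Jeffrey and Knuth (1996). On a branch cut, values are defined by continuity from the upper half plane and $W_k'$ denotes the derivative of the fixed branch $W_k$ (directional derivative along the cut there). *)

(* Defs.v *)
From Stdlib Require Import Reals ZArith ClassicalEpsilon.
From Coquelicot Require Import Coquelicot.
Open Scope R_scope.

Definition cexp (w : C) : C :=
  (exp (Re w) * cos (Im w), exp (Re w) * sin (Im w)).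

(** x-coordinate of the boundary curves  x = - y cot y  of the branch ranges
    (Corless, Gonnet, Hare, Jeffrey, Knuth 1996). *)
Definition lw_phi (y : R) : R := - y * cos y / sin y.

(** Range of the k-th branch W_k of Lambert W, in the standard convention
    of Corless et al. (1996), including the boundary pieces selected by
    "continuity from the upper half plane" (counter-clockwise continuity)
    on the branch cuts. *)
Definition lw_branch (k : Z) (w : C) : Prop :=
  let x := Re w in
  let y := Im w in
  let kr := IZR k in
  if (k =? 0)%Z then
    (- PI < y < 0 /\ lw_phi y < x) \/
    (y = 0 /\ -1 <= x) \/
    (0 < y < PI /\ lw_phi y <= x)
  else if (0 <? k)%Z then
    (2 * (kr - 1) * PI < y < (2 * kr - 1) * PI /\ x < lw_phi y) \/
    ((2 * kr - 1) * PI <= y <= 2 * kr * PI) \/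
    (2 * kr * PI < y < (2 * kr + 1) * PI /\ lw_phi y <= x)
  else
    (k = (-1)%Z /\ y = 0 /\ x < -1) \/
    ((2 * kr + 1) * PI < y < (2 * kr + 2) * PI /\ x <= lw_phi y) \/
    (2 * kr * PI <= y <= (2 * kr + 1) * PI) \/
    ((2 * kr - 1) * PI < y < 2 * kr * PI /\ lw_phi y < x).

(** W_k(z): the (unique) solution w of w e^w = z lying in the range of
    branch k.  (Chosen by Hilbert's epsilon; where no such w exists,
    i.e. z = 0 with k <> 0, or z = -1/e with k = -1, the value is
    irrelevant for the theorem.) *)
Definition LambertW (k : Z) (z : C) : C :=
  epsilon (inhabits (0%R, 0%R))
    (fun w : C => lw_branch k w /\ Cmult w (cexp w) = z).

Definition lw_on_cut (k : Z) (z : C) : Prop :=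
  Im z = 0 /\
  (if (k =? 0)%Z then Re z <= - exp (-1) else Re z <= 0).

(** Off the branch cut this is the complex derivative; on the cut it is the
    directional derivative along the cut (the real direction). *)
Definition lw_deriv (k : Z) (z d : C) : Prop :=
  if excluded_middle_informative (lw_on_cut k z) then
    is_derive (fun h : R => LambertW k (Cplus z (RtoC h))) 0 d
  else
    is_derive (LambertW k) z d.

(* Main.v *)
Require Import Defs.
From Stdlib Require Import Reals ZArith Lra Lia ClassicalEpsilon.
From Coquelicot Require Import Coquelicot.
Open Scope R_scope.

Lemma sin_shift_int x m : sin (x + 2 * IZR m * PI) = sin x.
Proof.
  destruct (Z_le_gt_dec 0 m) as [H|H].
  - rewrite <- (Z2Nat.id m) by lia. rewrite <- INR_IZR_INZ. apply sin_period.
  - assert (E : IZR m = - INR (Z.to_nat (- m))).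
    { rewrite INR_IZR_INZ, Z2Nat.id by lia. rewrite opp_IZR. ring. }
    rewrite E. rewrite <- (sin_period (x + 2 * - INR (Z.to_nat (- m)) * PI) (Z.to_nat (-m))).
    f_equal. ring.
Qed.

Lemma cos_shift_int x m : cos (x + 2 * IZR m * PI) = cos x.
Proof.
  destruct (Z_le_gt_dec 0 m) as [H|H].
  - rewrite <- (Z2Nat.id m) by lia. rewrite <- INR_IZR_INZ. apply cos_period.
  - assert (E : IZR m = - INR (Z.to_nat (- m))).
    { rewrite INR_IZR_INZ, Z2Nat.id by lia. rewrite opp_IZR. ring. }
    rewrite E. rewrite <- (cos_period (x + 2 * - INR (Z.to_nat (- m)) * PI) (Z.to_nat (-m))).
    f_equal. ring.
Qed.

Lemma sin_pos_int (m : Z) u : 2 * IZR m * PI < u < (2 * IZR m + 1) * PI -> 0 < sin u.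
Proof.
  intros H. replace u with ((u - 2 * IZR m * PI) + 2 * IZR m * PI) by ring.
  rewrite sin_shift_int. apply sin_gt_0; lra.
Qed.

Lemma sin_nonneg_int (m : Z) u : 2 * IZR m * PI <= u <= (2 * IZR m + 1) * PI -> 0 <= sin u.
Proof.
  intros H. replace u with ((u - 2 * IZR m * PI) + 2 * IZR m * PI) by ring.
  rewrite sin_shift_int. apply sin_ge_0; lra.
Qed.

Lemma sin_neg_int (m : Z) u : (2 * IZR m - 1) * PI < u < 2 * IZR m * PI -> sin u < 0.
Proof.
  intros H. replace u with ((u - 2 * IZR (m - 1) * PI) + 2 * IZR (m - 1) * PI) by ring.
  rewrite sin_shift_int. rewrite minus_IZR. apply sin_lt_0; lra.
Qed.

Lemma sin_nonpos_int (m : Z) u : (2 * IZR m - 1) * PI <= u <= 2 * IZR m * PI -> sin u <= 0.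
Proof.
  intros H. replace u with ((u - 2 * IZR (m - 1) * PI) + 2 * IZR (m - 1) * PI) by ring.
  rewrite sin_shift_int. rewrite minus_IZR. apply sin_le_0; lra.
Qed.

Lemma angle_unique A B : cos A = cos B -> sin A = sin B -> Rabs (A - B) < 2 * PI -> A = B.
Proof.
  intros Hc Hs Hd.
  assert (S : sin (A - B) = 0).
  { unfold Rminus. rewrite sin_plus, sin_neg, cos_neg, Hc, Hs. ring. }
  assert (C1 : cos (A - B) = 1).
  { unfold Rminus. rewrite cos_plus, sin_neg, cos_neg, Hc, Hs.
    rewrite <- (sin2_cos2 B). unfold Rsqr. ring. }
  destruct (sin_eq_0_0 _ S) as [n Hn].
  assert (PI > 0) by apply PI_RGT_0.
  assert (Hb : Rabs (IZR n) < 2).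
  { rewrite Hn in Hd. rewrite Rabs_mult, (Rabs_right PI) in Hd by lra.
    apply Rmult_lt_reg_r with PI; lra. }
  apply Rabs_def2 in Hb. destruct Hb as [Hb1 Hb2].
  assert (Hb3 : (-2 < n)%Z) by (apply lt_IZR; simpl; lra).
  assert (Hb4 : (n < 2)%Z) by (apply lt_IZR; simpl; lra).
  assert (n = (-1)%Z \/ n = 0%Z \/ n = 1%Z) as [-> | [-> | ->]] by lia.
  - rewrite Hn in C1. replace (IZR (-1) * PI) with (- PI) in C1 by (simpl; ring).
    rewrite cos_neg, cos_PI in C1. lra.
  - rewrite Hn in *. lra.
  - rewrite Hn in C1. replace (IZR 1 * PI) with PI in C1 by (simpl; ring).
    rewrite cos_PI in C1. lra.
Qed.

Lemma arg_exists x y : 0 < sqrt (x ^ 2 + y ^ 2) ->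
  exists al, - PI < al <= PI /\ x = sqrt (x ^ 2 + y ^ 2) * cos al /\ y = sqrt (x ^ 2 + y ^ 2) * sin al.
Proof.
  intros Hm. set (m := sqrt (x ^ 2 + y ^ 2)) in *.
  assert (Hm2 : m * m = x ^ 2 + y ^ 2).
  { unfold m. apply sqrt_sqrt. nra. }
  assert (Hxm : -1 <= x / m <= 1).
  { split.
    - apply Rmult_le_reg_r with m; [lra|]. field_simplify; [|lra]. nra.
    - apply Rmult_le_reg_r with m; [lra|]. field_simplify; [|lra]. nra. }
  assert (HA : Rabs y * Rabs y = y * y).
  { rewrite <- Rabs_mult. apply Rabs_right. nra. }
  assert (Hsq : sqrt (1 - (x / m)²) = Rabs y / m).
  { replace (1 - (x / m)²) with ((Rabs y / m)²).
    - apply sqrt_Rsqr. apply Rdiv_le_0_compat; [apply Rabs_pos|lra].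
    - unfold Rsqr.
      replace (Rabs y / m * (Rabs y / m)) with (Rabs y * Rabs y / (m*m)) by (field; lra).
      rewrite HA. replace (y * y) with (m * m - x * x) by nra. field. lra. }
  assert (PI > 0) by apply PI_RGT_0.
  destruct (Rle_or_lt 0 y) as [Hy|Hy].
  - exists (acos (x / m)). pose proof (acos_bound (x/m)).
    rewrite sin_acos, cos_acos by lra. rewrite Hsq.
    rewrite Rabs_right by lra.
    repeat split; try lra; field; lra.
  - exists (- acos (x / m)). pose proof (acos_bound (x/m)).
    rewrite sin_neg, cos_neg, sin_acos, cos_acos by lra. rewrite Hsq.
    rewrite Rabs_left by lra.
    assert (acos (x / m) <> PI).
    { intros E. assert (cos (acos (x/m)) = -1) by (rewrite E; apply cos_PI).
      rewrite cos_acos in H1 by lra.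
      assert (Hx : x = (x / m) * m) by (field; lra).
      rewrite H1 in Hx. nra. }
    repeat split; try lra; field; lra.
Qed.

Definition Sys L T a b := - PI < b <= PI /\ a + exp a * cos b = L /\ b + exp a * sin b = T.

Definition hfun T b := ln ((T - b) / sin b) + (T - b) * cos b / sin b.
Definition dh T b := - (1 / (T - b)) - 2 * cos b / sin b - (T - b) / (sin b * sin b).

Lemma sc1 b : sin b * sin b + cos b * cos b = 1.
Proof. rewrite <- (sin2_cos2 b). unfold Rsqr. ring. Qed.

Lemma hfun_deriv T b : 0 < b < PI -> b < T -> is_derive (hfun T) b (dh T b).
Proof.
  intros Hb HT. assert (Hs : 0 < sin b) by (apply sin_gt_0; lra).
  unfold hfun, dh. auto_derive.
  - repeat split; try lra. apply Rmult_lt_0_compat; [lra|]. apply Rinv_0_lt_compat; lra.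
  - change b with (b : R). transitivity (- (1 / (T - b)) - 2 * cos b / sin b - (T - b) / (sin b * sin b)
       - (T - b) * (sin b * sin b + cos b * cos b - 1) / (sin b * sin b)).
    + field. split; lra.
    + rewrite sc1. field. split; lra.
Qed.

Lemma dh_neg T b : 0 < b < PI -> b < T -> dh T b < 0.
Proof.
  intros Hb HT. assert (Hs : 0 < sin b) by (apply sin_gt_0; lra).
  pose proof (sc1 b).
  unfold dh. set (s := T - b). set (S := sin b). set (Cc := cos b). fold S Cc in H.
  assert (0 < s) by (unfold s; lra). assert (HS : 0 < S) by exact Hs.
  assert (Hp : 0 < S * S + 2 * s * S * Cc + s * s).
  { assert (E : S * S + 2 * s * S * Cc + s * s = (s + S * Cc) ^ 2 + (S * S) * (S * S)).
    { replace (S * S * (S * S)) with (S * S * (1 - Cc * Cc)) by (rewrite <- H; ring). ring. }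
    rewrite E. assert (0 < S * S) by (apply Rmult_lt_0_compat; exact Hs). assert (0 < S * S * (S * S)) by (apply Rmult_lt_0_compat; assumption). pose proof (pow2_ge_0 (s + S * Cc)). lra. }
  replace (- (1 / s) - 2 * Cc / S - s / (S * S)) with (- (S * S + 2 * s * S * Cc + s * s) / (s * S * S))
    by (field; repeat split; lra).
  apply Ropp_lt_cancel. rewrite Ropp_0. unfold Rdiv. rewrite Ropp_mult_distr_l, Ropp_involutive.
  apply Rmult_lt_0_compat; [lra|]. apply Rinv_0_lt_compat. apply Rmult_lt_0_compat; nra.
Qed.

Lemma hfun_decr T b1 b2 : 0 < b1 -> b1 < b2 -> b2 < PI -> b2 < T -> hfun T b2 < hfun T b1.
Proof.
  intros H1 H2 H3 H4.
  destruct (MVT_cor2 (hfun T) (dh T) b1 b2 H2) as [c [Ec Hc]].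
  - intros c Hc. apply is_derive_Reals. apply hfun_deriv; lra.
  - assert (dh T c < 0) by (apply dh_neg; lra). nra.
Qed.

Lemma sys_b_range L T a b : -1 < L -> Sys L T a b -> - PI < b < PI.
Proof.
  intros HL [[Hb1 Hb2] [E1 E2]]. split; [lra|].
  destruct Hb2 as [Hb2 | Hb2]; [lra|]. subst b.
  rewrite cos_PI in E1. pose proof (exp_ineq1_le a). lra.
Qed.

Lemma sys_pos L T a b : -1 < L -> Sys L T a b -> 0 < b -> b < T /\ b < PI /\ hfun T b = L /\ a = ln ((T - b) / sin b).
Proof.
  intros HL HS Hb. pose proof (sys_b_range _ _ _ _ HL HS) as Hr.
  destruct HS as [_ [E1 E2]].
  assert (Hs : 0 < sin b) by (apply sin_gt_0; lra).
  pose proof (exp_pos a).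
  assert (Ea : exp a = (T - b) / sin b) by (rewrite <- E2; field; repeat split; lra).
  assert (b < T) by (rewrite <- E2; assert (0 < exp a * sin b) by (apply Rmult_lt_0_compat; lra); lra).
  assert (Ha : a = ln ((T - b) / sin b)) by (rewrite <- Ea; rewrite ln_exp; reflexivity).
  repeat split; try lra.
  unfold hfun. rewrite <- Ha, <- E1, Ea. field. repeat split; lra.
Qed.

Lemma pos_sys L T b : 0 < b < PI -> b < T -> hfun T b = L -> Sys L T (ln ((T - b) / sin b)) b.
Proof.
  intros Hb HT Hh. assert (Hs : 0 < sin b) by (apply sin_gt_0; lra).
  assert (Hp : 0 < (T - b) / sin b) by (apply Rdiv_lt_0_compat; lra).
  split; [lra|]. rewrite exp_ln by exact Hp. split.
  - rewrite <- Hh. unfold hfun. field. repeat split; lra.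
  - field. repeat split; lra.
Qed.

Lemma sys_sign L T a b : -1 < L -> Sys L T a b ->
  (0 < b -> b < T) /\ (b < 0 -> T < b) /\ (b = 0 -> T = 0).
Proof.
  intros HL HS. pose proof (sys_b_range _ _ _ _ HL HS) as Hr.
  destruct HS as [_ [E1 E2]]. pose proof (exp_pos a).
  repeat split; intros Hb.
  - assert (0 < sin b) by (apply sin_gt_0; lra).
    assert (0 < exp a * sin b) by (apply Rmult_lt_0_compat; lra). lra.
  - assert (sin b < 0) by (apply sin_lt_0_var; lra).
    assert (exp a * sin b < 0) by (apply Rmult_pos_neg; lra). lra.
  - subst b. rewrite sin_0 in E2. lra.
Qed.

Lemma sys_neg L T a b : Sys L T a b -> b <> PI -> Sys L (- T) a (- b).
Proof.
  intros [[Hb1 Hb2] [E1 E2]] Hn. split; [|split].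
  - destruct Hb2; [lra| congruence].
  - rewrite cos_neg. exact E1.
  - rewrite sin_neg. lra.
Qed.

Lemma hfun_cont T b : 0 < b < PI -> b < T -> continuity_pt (hfun T) b.
Proof.
  intros H1 H2. apply derivable_continuous_pt.
  exists (dh T b). apply is_derive_Reals. apply hfun_deriv; assumption.
Qed.

Lemma hfun_exists L T : -1 < L -> 0 < T -> exists b, 0 < b < PI /\ b < T /\ hfun T b = L.
Proof.
  intros HL HT. pose proof PI_RGT_0 as HPI.
  set (M := Rmin PI T).
  assert (HM1 : 0 < M) by (unfold M; apply Rmin_glb_lt; lra).
  assert (HM2 : M <= PI) by apply Rmin_l.
  assert (HM3 : M <= T) by apply Rmin_r.
  set (b1 := Rmin (M / 4) (T / exp L / 2)).
  assert (Hb1a : 0 < b1).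
  { unfold b1. apply Rmin_glb_lt; [lra|]. pose proof (exp_pos L).
    apply Rdiv_lt_0_compat; [apply Rdiv_lt_0_compat|]; lra. }
  assert (Hb1b : b1 <= M / 4) by apply Rmin_l.
  assert (Hb1c : b1 <= T / exp L / 2) by apply Rmin_r.
  set (d := L + 1).
  set (K := Rmax 1 T).
  assert (HK1 : 1 <= K) by apply Rmax_l.
  assert (HK2 : T <= K) by apply Rmax_r.
  assert (HsM : 0 < sin (M / 4)) by (apply sin_gt_0; lra).
  set (eta := Rmin (M / 2) (d * sin (M / 4) / (2 * K))).
  assert (He1 : 0 < eta).
  { unfold eta. apply Rmin_glb_lt; [lra|]. unfold d.
    apply Rdiv_lt_0_compat; [apply Rmult_lt_0_compat|]; lra. }
  assert (He2 : eta <= M / 2) by apply Rmin_l.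
  assert (He3 : eta <= d * sin (M / 4) / (2 * K)) by apply Rmin_r.
  set (b2 := M - eta).
  assert (Hh1 : L <= hfun T b1).
  { pose proof (sin_lt_x b1 Hb1a) as Hsx.
    assert (Hs1 : 0 < sin b1) by (apply sin_gt_0; lra).
    assert (Hc1 : 0 <= cos b1) by (apply cos_ge_0; lra).
    set (E := (T - b1) / sin b1).
    assert (HE : exp L <= E).
    { unfold E. apply Rmult_le_reg_r with (sin b1); [lra|].
      replace ((T - b1) / sin b1 * sin b1) with (T - b1) by (field; lra).
      assert (Hx : exp L * b1 <= T / 2).
      { apply Rle_trans with (exp L * (T / exp L / 2)).
        - apply Rmult_le_compat_l; [pose proof (exp_pos L); lra | exact Hb1c].
        - pose proof (exp_pos L). replace (exp L * (T / exp L / 2)) with (T / 2) by (field; lra). lra. }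
      pose proof (exp_pos L). nra. }
    assert (HE0 : 0 < E) by (pose proof (exp_pos L); lra).
    unfold hfun. fold E.
    replace ((T - b1) * cos b1 / sin b1) with (E * cos b1) by (unfold E; field; lra).
    assert (L <= ln E) by (rewrite <- (ln_exp L); apply ln_le; [apply exp_pos | exact HE]).
    assert (0 <= E * cos b1) by (apply Rmult_le_pos; lra). lra. }
  assert (Hb2a : M / 2 <= b2) by (unfold b2; lra).
  assert (Hb2b : b2 < M) by (unfold b2; lra).
  assert (Hh2 : hfun T b2 < L).
  { set (c := b2 / 2).
    assert (Hsc : sin (M / 4) <= sin c) by (apply sin_incr_1; unfold c; lra).
    assert (Hcc : 0 < cos c) by (apply cos_gt_0; unfold c; lra).
    assert (Hsc0 : 0 < sin c) by lra.
    assert (Esb : sin b2 = 2 * sin c * cos c) by (replace b2 with (2 * c) by (unfold c; field); apply sin_2a).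
    assert (Ecb : cos b2 = 2 * cos c * cos c - 1).
    { replace b2 with (2 * c) by (unfold c; field). rewrite cos_2a_cos. reflexivity. }
    assert (Hs2 : 0 < sin b2) by (rewrite Esb; apply Rmult_lt_0_compat; [lra|exact Hcc]).
    assert (Hkey : (T - b2) * cos c < d * sin c).
    { destruct (Rle_or_lt T PI) as [HTP|HTP].
      - assert (EM : M = T) by (unfold M; apply Rmin_right; lra).
        assert (T - b2 = eta) by (unfold b2; lra).
        assert (cos c <= 1) by apply COS_bound.
        assert (eta <= d * sin (M / 4) / 2).
        { apply Rle_trans with (1 := He3). unfold Rdiv.
          apply Rmult_le_compat_l; [unfold d; nra|]. apply Rinv_le_contravar; lra. }
        assert (0 < d) by (unfold d; lra).
        nra.
      - assert (EM : M = PI) by (unfold M; apply Rmin_left; lra).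
        assert (Ec : cos c = sin (eta / 2)).
        { replace c with (PI / 2 - eta / 2) by (unfold c, b2; rewrite EM; field). apply cos_shift. }
        assert (sin (eta / 2) < eta / 2) by (apply sin_lt_x; lra).
        assert (0 <= T - b2 <= K) by (unfold b2; lra).
        assert (K * eta <= d * sin (M / 4) / 2).
        { apply Rmult_le_reg_l with (/ K); [apply Rinv_0_lt_compat; lra|].
          replace (/ K * (K * eta)) with eta by (field; lra).
          replace (/ K * (d * sin (M / 4) / 2)) with (d * sin (M / 4) / (2 * K)) by (field; lra).
          exact He3. }
        assert (0 < d) by (unfold d; lra).
        rewrite Ec. nra. }
    set (E := (T - b2) / sin b2).
    assert (HE0 : 0 < E) by (unfold E; apply Rdiv_lt_0_compat; lra).
    assert (HlnE : ln E <= E - 1).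
    { pose proof (exp_ineq1_le (ln E)). rewrite exp_ln in H by exact HE0. lra. }
    unfold hfun. fold E.
    replace ((T - b2) * cos b2 / sin b2) with (E * cos b2) by (unfold E; field; lra).
    assert (E * (1 + cos b2) < d).
    { unfold E. rewrite Ecb, Esb.
      replace ((T - b2) / (2 * sin c * cos c) * (1 + (2 * cos c * cos c - 1)))
        with ((T - b2) * cos c / sin c) by (field; lra).
      apply Rmult_lt_reg_r with (sin c); [lra|].
      replace ((T - b2) * cos c / sin c * sin c) with ((T - b2) * cos c) by (field; lra).
      lra. }
    unfold d in *. lra. }
  assert (Hb12 : b1 < b2) by lra.
  destruct (Rle_lt_or_eq_dec L (hfun T b1) Hh1) as [Hlt|Heq].
  - destruct (Ranalysis5.IVT_interv (fun b => L - hfun T b) b1 b2) as [b [Hb Hfb]].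
    + intros x Hx. apply continuity_pt_minus; [apply continuity_pt_const; intros ? ?; reflexivity|].
      apply hfun_cont; lra.
    + exact Hb12.
    + lra.
    + lra.
    + exists b. repeat split; lra.
  - exists b1. repeat split; lra.
Qed.

Lemma sys_exists L T : -1 < L -> exists a b, Sys L T a b.
Proof.
  intros HL. destruct (Rtotal_order T 0) as [HT | [HT | HT]].
  - destruct (hfun_exists L (- T) HL) as [b [Hb1 [Hb2 Hb3]]]; [lra|].
    pose proof (pos_sys L (- T) b Hb1 Hb2 Hb3) as HS.
    exists (ln ((- T - b) / sin b)), (- b).
    assert (Hn : b <> PI) by lra.
    pose proof (sys_neg _ _ _ _ HS Hn) as H'. rewrite Ropp_involutive in H'. exact H'.
  - subst T.
    destruct (Ranalysis5.IVT_interv (fun a => a + exp a - L) (L - 1 - exp L) L) as [a [Ha Hfa]].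
    + intros x Hx. apply continuity_pt_minus; [|apply continuity_pt_const; intros ? ?; reflexivity].
      apply continuity_pt_plus; [apply continuity_pt_id|].
      apply derivable_continuous_pt. apply derivable_pt_exp.
    + pose proof (exp_pos L). lra.
    + assert (exp (L - 1 - exp L) < exp L) by (apply exp_increasing; pose proof (exp_pos L); lra).
      simpl. lra.
    + pose proof (exp_pos L). lra.
    + exists a, 0. split; [pose proof PI_RGT_0; lra|]. rewrite cos_0, sin_0. split; lra.
  - destruct (hfun_exists L T HL HT) as [b [Hb1 [Hb2 Hb3]]].
    exists (ln ((T - b) / sin b)), b. apply pos_sys; assumption.
Qed.

Lemma sys_unique_pos L T a b a' b' : -1 < L -> 0 < T -> Sys L T a b -> Sys L T a' b' -> a = a' /\ b = b'.
Proof.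
  intros HL HT H1 H2.
  assert (Pos : forall a b, Sys L T a b -> 0 < b).
  { intros x y Hs. destruct (sys_sign _ _ _ _ HL Hs) as [_ [S2 S3]].
    destruct (Rtotal_order y 0) as [Hy|[Hy|Hy]]; [specialize (S2 Hy); lra| specialize (S3 Hy); lra| lra]. }
  pose proof (Pos _ _ H1) as P1. pose proof (Pos _ _ H2) as P2.
  destruct (sys_pos _ _ _ _ HL H1 P1) as [A1 [A2 [A3 A4]]].
  destruct (sys_pos _ _ _ _ HL H2 P2) as [B1 [B2 [B3 B4]]].
  assert (b = b').
  { destruct (Rtotal_order b b') as [Hl|[He|Hl]]; [|exact He|].
    - pose proof (hfun_decr T b b' P1 Hl B2 B1). lra.
    - pose proof (hfun_decr T b' b P2 Hl A2 A1). lra. }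
  subst b'. split; [congruence | reflexivity].
Qed.

Lemma sys_unique L T a b a' b' : -1 < L -> Sys L T a b -> Sys L T a' b' -> a = a' /\ b = b'.
Proof.
  intros HL H1 H2.
  destruct (Rtotal_order T 0) as [HT | [HT | HT]].
  - pose proof (sys_b_range _ _ _ _ HL H1). pose proof (sys_b_range _ _ _ _ HL H2).
    destruct (sys_unique_pos L (- T) a (- b) a' (- b') HL) as [E1 E2]; [lra| apply sys_neg; [exact H1|lra] | apply sys_neg; [exact H2|lra] |].
    split; [exact E1| lra].
  - subst T.
    assert (Z : forall a b, Sys L 0 a b -> b = 0).
    { intros x y Hs. destruct (sys_sign _ _ _ _ HL Hs) as [S1 [S2 _]].
      destruct (Rtotal_order y 0) as [Hy|[Hy|Hy]]; [specialize (S2 Hy); lra| exact Hy| specialize (S1 Hy); lra]. }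
    pose proof (Z _ _ H1). pose proof (Z _ _ H2). subst b b'.
    destruct H1 as [_ [E1 _]]. destruct H2 as [_ [E2 _]]. rewrite cos_0 in E1, E2.
    split; [|reflexivity].
    destruct (Rtotal_order a a') as [Hl|[He|Hl]]; [|exact He|].
    + pose proof (exp_increasing _ _ Hl). lra.
    + pose proof (exp_increasing _ _ Hl). lra.
  - apply (sys_unique_pos L T); assumption.
Qed.

Lemma sgn1 D s M S: D * s = M * S -> 0 < M -> 0 < s -> (D < 0 <-> S < 0) /\ (0 <= D <-> 0 <= S).
Proof. intros E HM Hs. repeat split; intros H; nra. Qed.
Lemma sgn2 D s M S: D * s = M * S -> 0 < M -> s < 0 -> (D <= 0 <-> 0 <= S) /\ (0 < D <-> S < 0).
Proof. intros E HM Hs. repeat split; intros H; nra. Qed.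

Lemma phi_rel x y al m : sin y <> 0 -> x = m * cos al -> y = m * sin al ->
  (x - lw_phi y) * sin y = m * sin (al + y).
Proof.
  intros Hs Ex Ey. unfold lw_phi. rewrite sin_plus.
  replace ((x - - y * cos y / sin y) * sin y) with (x * sin y + y * cos y) by (field; exact Hs).
  rewrite Ex, Ey. ring.
Qed.

Lemma al_pos y al m : 0 < m -> - PI < al <= PI -> y = m * sin al -> 0 < y -> 0 < al < PI.
Proof.
  intros Hm Ha Ey Hy. pose proof PI_RGT_0.
  destruct (Rtotal_order al 0) as [H0|[H0|H0]].
  - assert (sin al < 0) by (apply sin_lt_0_var; lra). nra.
  - subst al. rewrite sin_0 in Ey. lra.
  - destruct Ha as [_ [Ha|Ha]]; [lra|]. subst al. rewrite sin_PI in Ey. lra.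
Qed.

Lemma al_neg y al m : 0 < m -> - PI < al <= PI -> y = m * sin al -> y < 0 -> - PI < al < 0.
Proof.
  intros Hm Ha Ey Hy. pose proof PI_RGT_0.
  destruct (Rtotal_order al 0) as [H0|[H0|H0]].
  - lra.
  - subst al. rewrite sin_0 in Ey. lra.
  - destruct Ha as [_ [Ha|Ha]].
    + assert (0 < sin al) by (apply sin_gt_0; lra). nra.
    + subst al. rewrite sin_PI in Ey. lra.
Qed.

Lemma al_zero y al m : 0 < m -> - PI < al <= PI -> y = m * sin al -> y = 0 -> al = 0 \/ al = PI.
Proof.
  intros Hm Ha Ey Hy. pose proof PI_RGT_0.
  destruct (Rtotal_order al 0) as [H0|[H0|H0]].
  - assert (sin al < 0) by (apply sin_lt_0_var; lra). nra.
  - left; exact H0.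
  - destruct Ha as [_ [Ha|Ha]].
    + assert (0 < sin al) by (apply sin_gt_0; lra). nra.
    + right; exact Ha.
Qed.

Lemma region_iff k x y al m : 0 < m -> - PI < al <= PI -> x = m * cos al -> y = m * sin al ->
  ~ (y = 0 /\ x < -1) ->
  (lw_branch k (x, y) <-> (2 * IZR k - 1) * PI < al + y <= (2 * IZR k + 1) * PI).
Proof.
  intros Hm Ha Ex Ey Hn. pose proof PI_RGT_0 as HPI.
  unfold lw_branch, Re, Im. simpl fst. simpl snd.
  set (kr := IZR k).
  destruct (Z.eqb_spec k 0) as [Hk0|Hk0].
  -
    assert (Hkr : kr = 0) by (unfold kr; rewrite Hk0; reflexivity). rewrite Hkr.
    split.
    + intros [[Hy Hx] | [[Hy Hx] | [Hy Hx]]].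
      * pose proof (al_neg _ _ _ Hm Ha Ey (proj2 Hy)) as Hal.
        assert (Sy : sin y < 0) by (apply (sin_neg_int 0); simpl; lra).
        pose proof (phi_rel _ _ _ _ (Rlt_not_eq _ _ Sy) Ex Ey) as E.
        destruct (sgn2 _ _ _ _ E Hm Sy) as [_ [S1 _]].
        assert (ST : sin (al + y) < 0) by (apply S1; lra).
        destruct (Rle_or_lt (al + y) (- PI)) as [Hc|Hc]; [|lra].
        assert (0 <= sin (al + y)) by (apply (sin_nonneg_int (-1)); simpl; lra). lra.
      * destruct (al_zero _ _ _ Hm Ha Ey Hy) as [-> | ->]; lra.
      * pose proof (al_pos _ _ _ Hm Ha Ey (proj1 Hy)) as Hal.
        assert (Sy : 0 < sin y) by (apply (sin_pos_int 0); simpl; lra).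
        pose proof (phi_rel _ _ _ _ (Rgt_not_eq _ _ Sy) Ex Ey) as E.
        destruct (sgn1 _ _ _ _ E Hm Sy) as [_ [S1 _]].
        assert (ST : 0 <= sin (al + y)) by (apply S1; lra).
        destruct (Rle_or_lt (al + y) PI) as [Hc|Hc]; [lra|].
        assert (sin (al + y) < 0) by (apply (sin_neg_int 1); simpl; lra). lra.
    + intros HT. destruct (Rtotal_order y 0) as [Hy|[Hy|Hy]].
      * left. pose proof (al_neg _ _ _ Hm Ha Ey Hy) as Hal.
        assert (Sy : sin y < 0) by (apply (sin_neg_int 0); simpl; lra).
        pose proof (phi_rel _ _ _ _ (Rlt_not_eq _ _ Sy) Ex Ey) as E.
        destruct (sgn2 _ _ _ _ E Hm Sy) as [_ [_ S1]].
        assert (ST : sin (al + y) < 0) by (apply (sin_neg_int 0); simpl; lra).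
        specialize (S1 ST). split; lra.
      * right; left. split; [exact Hy|]. destruct (Rle_or_lt (-1) x); [assumption|].
        exfalso; apply Hn; split; assumption.
      * right; right. pose proof (al_pos _ _ _ Hm Ha Ey Hy) as Hal.
        assert (Sy : 0 < sin y) by (apply (sin_pos_int 0); simpl; lra).
        pose proof (phi_rel _ _ _ _ (Rgt_not_eq _ _ Sy) Ex Ey) as E.
        destruct (sgn1 _ _ _ _ E Hm Sy) as [_ [_ S1]].
        assert (ST : 0 <= sin (al + y)) by (apply (sin_nonneg_int 0); simpl; lra).
        specialize (S1 ST). split; lra.
  - destruct (Z.ltb_spec 0 k) as [Hkp|Hkn].
    +
      assert (Hkr : 1 <= kr) by (unfold kr; apply IZR_le; lia).
      assert (Ekm : IZR (k - 1) = kr - 1) by (unfold kr; rewrite minus_IZR; reflexivity).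
      assert (Ekp : IZR (k + 1) = kr + 1) by (unfold kr; rewrite plus_IZR; reflexivity).
      split.
      * intros [[Hy Hx] | [Hy | [Hy Hx]]].
        -- assert (Hy0 : 0 < y) by nra.
           pose proof (al_pos _ _ _ Hm Ha Ey Hy0) as Hal.
           assert (Sy : 0 < sin y) by (apply (sin_pos_int (k - 1)); rewrite Ekm; lra).
           pose proof (phi_rel _ _ _ _ (Rgt_not_eq _ _ Sy) Ex Ey) as E.
           destruct (sgn1 _ _ _ _ E Hm Sy) as [[S1 _] _].
           assert (ST : sin (al + y) < 0) by (apply S1; lra).
           destruct (Rle_or_lt (al + y) ((2 * kr - 1) * PI)) as [Hc|Hc].
           ++ assert (0 <= sin (al + y)) by (apply (sin_nonneg_int (k - 1)); rewrite Ekm; lra). lra.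
           ++ split; [lra|]. nra.
        -- assert (Hy0 : 0 < y) by nra.
           pose proof (al_pos _ _ _ Hm Ha Ey Hy0) as Hal. lra.
        -- assert (Hy0 : 0 < y) by nra.
           pose proof (al_pos _ _ _ Hm Ha Ey Hy0) as Hal.
           assert (Sy : 0 < sin y) by (apply (sin_pos_int k); fold kr; lra).
           pose proof (phi_rel _ _ _ _ (Rgt_not_eq _ _ Sy) Ex Ey) as E.
           destruct (sgn1 _ _ _ _ E Hm Sy) as [_ [S1 _]].
           assert (ST : 0 <= sin (al + y)) by (apply S1; lra).
           destruct (Rle_or_lt (al + y) ((2 * kr + 1) * PI)) as [Hc|Hc].
           ++ split; [nra|lra].
           ++ assert (sin (al + y) < 0) by (apply (sin_neg_int (k + 1)); rewrite Ekp; lra). lra.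
      * intros HT.
        assert (Hy0 : 0 < y).
        { destruct (Rtotal_order y 0) as [Hy|[Hy|Hy]]; [|exfalso|exact Hy].
          - pose proof (al_neg _ _ _ Hm Ha Ey Hy). exfalso. nra.
          - destruct (al_zero _ _ _ Hm Ha Ey Hy) as [-> | ->]; nra. }
        pose proof (al_pos _ _ _ Hm Ha Ey Hy0) as Hal.
        destruct (Rlt_or_le y ((2 * kr - 1) * PI)) as [Hy1|Hy1].
        -- left. assert (Sy : 0 < sin y) by (apply (sin_pos_int (k - 1)); rewrite Ekm; lra).
           pose proof (phi_rel _ _ _ _ (Rgt_not_eq _ _ Sy) Ex Ey) as E.
           destruct (sgn1 _ _ _ _ E Hm Sy) as [[_ S1] _].
           assert (ST : sin (al + y) < 0) by (apply (sin_neg_int k); fold kr; lra).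
           specialize (S1 ST). split; lra.
        -- destruct (Rle_or_lt y (2 * kr * PI)) as [Hy2|Hy2].
           ++ right; left. lra.
           ++ right; right. assert (Sy : 0 < sin y) by (apply (sin_pos_int k); fold kr; lra).
              pose proof (phi_rel _ _ _ _ (Rgt_not_eq _ _ Sy) Ex Ey) as E.
              destruct (sgn1 _ _ _ _ E Hm Sy) as [_ [_ S1]].
              assert (ST : 0 <= sin (al + y)) by (apply (sin_nonneg_int k); fold kr; lra).
              specialize (S1 ST). split; lra.
    +
      assert (Hkr : kr <= -1) by (unfold kr; apply IZR_le; lia).
      assert (Ekm : IZR (k - 1) = kr - 1) by (unfold kr; rewrite minus_IZR; reflexivity).
      assert (Ekp : IZR (k + 1) = kr + 1) by (unfold kr; rewrite plus_IZR; reflexivity).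
      split.
      * intros [[_ [Hy Hx]] | [[Hy Hx] | [Hy | [Hy Hx]]]].
        -- exfalso; apply Hn; split; assumption.
        -- assert (Hy0 : y < 0) by nra.
           pose proof (al_neg _ _ _ Hm Ha Ey Hy0) as Hal.
           assert (Sy : sin y < 0) by (apply (sin_neg_int (k + 1)); rewrite Ekp; lra).
           pose proof (phi_rel _ _ _ _ (Rlt_not_eq _ _ Sy) Ex Ey) as E.
           destruct (sgn2 _ _ _ _ E Hm Sy) as [[S1 _] _].
           assert (ST : 0 <= sin (al + y)) by (apply S1; lra).
           destruct (Rle_or_lt (al + y) ((2 * kr + 1) * PI)) as [Hc|Hc].
           ++ split; [nra|lra].
           ++ assert (sin (al + y) < 0) by (apply (sin_neg_int (k + 1)); rewrite Ekp; lra). lra.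
        -- assert (Hy0 : y < 0) by nra.
           pose proof (al_neg _ _ _ Hm Ha Ey Hy0) as Hal. lra.
        -- assert (Hy0 : y < 0) by nra.
           pose proof (al_neg _ _ _ Hm Ha Ey Hy0) as Hal.
           assert (Sy : sin y < 0) by (apply (sin_neg_int k); fold kr; lra).
           pose proof (phi_rel _ _ _ _ (Rlt_not_eq _ _ Sy) Ex Ey) as E.
           destruct (sgn2 _ _ _ _ E Hm Sy) as [_ [S1 _]].
           assert (ST : sin (al + y) < 0) by (apply S1; lra).
           destruct (Rle_or_lt (al + y) ((2 * kr - 1) * PI)) as [Hc|Hc].
           ++ assert (0 <= sin (al + y)) by (apply (sin_nonneg_int (k - 1)); rewrite Ekm; lra). lra.
           ++ split; [lra|]. nra.
      * intros HT.
        assert (Hy0 : y < 0).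
        { destruct (Rtotal_order y 0) as [Hy|[Hy|Hy]]; [exact Hy|exfalso|exfalso].
          - destruct (al_zero _ _ _ Hm Ha Ey Hy) as [-> | ->]; nra.
          - pose proof (al_pos _ _ _ Hm Ha Ey Hy). nra. }
        pose proof (al_neg _ _ _ Hm Ha Ey Hy0) as Hal.
        right.
        destruct (Rlt_or_le y (2 * kr * PI)) as [Hy1|Hy1].
        -- right; right. assert (Sy : sin y < 0) by (apply (sin_neg_int k); fold kr; lra).
           pose proof (phi_rel _ _ _ _ (Rlt_not_eq _ _ Sy) Ex Ey) as E.
           destruct (sgn2 _ _ _ _ E Hm Sy) as [_ [_ S1]].
           assert (ST : sin (al + y) < 0) by (apply (sin_neg_int k); fold kr; lra).
           specialize (S1 ST). split; lra.
        -- destruct (Rle_or_lt y ((2 * kr + 1) * PI)) as [Hy2|Hy2].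
           ++ right; left. lra.
           ++ left. assert (Sy : sin y < 0) by (apply (sin_neg_int (k + 1)); rewrite Ekp; lra).
              pose proof (phi_rel _ _ _ _ (Rlt_not_eq _ _ Sy) Ex Ey) as E.
              destruct (sgn2 _ _ _ _ E Hm Sy) as [[_ S1] _].
              assert (ST : 0 <= sin (al + y)) by (apply (sin_nonneg_int k); fold kr; lra).
              specialize (S1 ST). split; lra.
Qed.

Definition solP L T : R * R :=
  epsilon (inhabits (0, 0)) (fun p : R * R => Sys L T (fst p) (snd p)).

Lemma solP_spec L T : -1 < L -> Sys L T (fst (solP L T)) (snd (solP L T)).
Proof.
  intros HL. unfold solP.
  apply (epsilon_spec (inhabits (0,0)) (fun p : R * R => Sys L T (fst p) (snd p))).
  destruct (sys_exists L T HL) as [a [b H]]. exists (a, b). exact H.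
Qed.

Definition Wsol L T : C :=
  (exp (fst (solP L T)) * cos (snd (solP L T)), exp (fst (solP L T)) * sin (snd (solP L T))).

Lemma fw_eq x y : Cmult (x, y) (cexp (x, y)) =
  (exp x * (x * cos y - y * sin y), exp x * (x * sin y + y * cos y)).
Proof. unfold Cmult, cexp, Re, Im. simpl. f_equal; ring. Qed.

Lemma fw_polar x y m al : x = m * cos al -> y = m * sin al ->
  Cmult (x, y) (cexp (x, y)) = (m * exp x * cos (al + y), m * exp x * sin (al + y)).
Proof.
  intros Ex Ey. rewrite fw_eq.
  assert (E1 : x * cos y - y * sin y = m * cos (al + y)).
  { rewrite cos_plus. transitivity ((m * cos al) * cos y - (m * sin al) * sin y).
    - rewrite <- Ex, <- Ey. reflexivity.
    - ring. }
  assert (E2 : x * sin y + y * cos y = m * sin (al + y)).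
  { rewrite sin_plus. transitivity ((m * cos al) * sin y + (m * sin al) * cos y).
    - rewrite <- Ex, <- Ey. reflexivity.
    - ring. }
  rewrite E1, E2. f_equal; ring.
Qed.

Lemma negx_small x : x < -1 -> - x * exp x < exp (-1).
Proof.
  intros Hx. pose proof (exp_ineq1 (- x - 1) ltac:(lra)) as H.
  assert (E : exp (- x - 1) * exp x = exp (-1)) by (rewrite <- exp_plus; f_equal; ring).
  pose proof (exp_pos x).
  apply Rmult_lt_compat_r with (r := exp x) in H; [|lra]. lra.
Qed.

Lemma LW_value k L T : -1 < L -> (2 * IZR k - 1) * PI < T <= (2 * IZR k + 1) * PI ->
  LambertW k (exp L * cos T, exp L * sin T) = Wsol L T.
Proof.
  intros HL HT. pose proof PI_RGT_0 as HPI.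
  pose proof (solP_spec L T HL) as HS.
  set (a := fst (solP L T)) in *. set (b := snd (solP L T)) in *.
  pose proof (sys_b_range _ _ _ _ HL HS) as Hb.
  set (z := (exp L * cos T, exp L * sin T)).
  assert (Uniq : forall w, lw_branch k w /\ Cmult w (cexp w) = z -> w = Wsol L T).
  { intros [x y] [Hbr Hf].
    set (m := sqrt (x ^ 2 + y ^ 2)).
    assert (Hm : 0 < m).
    { unfold m. apply sqrt_lt_R0.
      destruct (Req_dec x 0) as [Hx|Hx]; destruct (Req_dec y 0) as [Hy|Hy].
      - subst x y. exfalso. rewrite fw_eq in Hf. unfold z in Hf. injection Hf as F1 F2.
        assert (exp L * cos T = 0) by (rewrite <- F1; ring).
        assert (exp L * sin T = 0) by (rewrite <- F2; ring).
        pose proof (exp_pos L).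
        assert (cos T = 0) by (apply Rmult_eq_reg_l with (exp L); lra).
        assert (sin T = 0) by (apply Rmult_eq_reg_l with (exp L); lra).
        pose proof (sin2_cos2 T). unfold Rsqr in *. nra.
      - nra.
      - nra.
      - nra. }
    destruct (arg_exists x y Hm) as [al [Hal [Ex Ey]]]. fold m in Ex, Ey.
    pose proof (fw_polar _ _ _ _ Ex Ey) as Hp. rewrite Hf in Hp. unfold z in Hp.
    injection Hp as F1 F2.
    assert (HR : (m * exp x) ^ 2 = exp L ^ 2).
    { transitivity ((m * exp x * cos (al + y)) ^ 2 + (m * exp x * sin (al + y)) ^ 2).
      - pose proof (sin2_cos2 (al + y)). unfold Rsqr in H. nra.
      - rewrite <- F1, <- F2. pose proof (sin2_cos2 T). unfold Rsqr in H. nra. }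
    assert (HR2 : m * exp x = exp L).
    { pose proof (exp_pos L). pose proof (exp_pos x).
      assert (0 < m * exp x) by (apply Rmult_lt_0_compat; lra).
      destruct (Rtotal_order (m * exp x) (exp L)) as [Hl|[He|Hl]]; [exfalso|exact He|exfalso]; nra. }
    assert (Hn : ~ (y = 0 /\ x < -1)).
    { intros [Hy Hx]. destruct (al_zero _ _ _ Hm Hal Ey Hy) as [H0 | H0].
      - rewrite H0, cos_0 in Ex. lra.
      - rewrite H0, cos_PI in Ex. assert (m = - x) by lra. rewrite H in HR2.
        pose proof (negx_small x Hx).
        assert (exp (-1) < exp L) by (apply exp_increasing; lra). lra. }
    pose proof (proj1 (region_iff k x y al m Hm Hal Ex Ey Hn) Hbr) as HTh.
    pose proof (exp_pos L).
    assert (Ec : cos (al + y) = cos T).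
    { rewrite HR2 in F1. apply Rmult_eq_reg_l with (exp L); lra. }
    assert (Es : sin (al + y) = sin T).
    { rewrite HR2 in F2. apply Rmult_eq_reg_l with (exp L); lra. }
    assert (Eth : al + y = T).
    { apply angle_unique; try assumption. apply Rabs_def1; lra. }
    assert (HS' : Sys L T (ln m) al).
    { split; [exact Hal|]. rewrite exp_ln by exact Hm. split.
      - rewrite <- Ex. rewrite <- (ln_exp x). rewrite <- ln_mult by (try exact Hm; apply exp_pos).
        rewrite HR2, ln_exp. reflexivity.
      - rewrite <- Ey. exact Eth. }
    destruct (sys_unique _ _ _ _ _ _ HL HS HS') as [Ea Eb].
    unfold Wsol. fold a b. rewrite Ex, Ey, Ea, Eb, exp_ln by exact Hm. reflexivity. }
  apply Uniq. unfold LambertW.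
  apply (epsilon_spec (inhabits (0%R, 0%R)) (fun w : C => lw_branch k w /\ Cmult w (cexp w) = z)).
  exists (Wsol L T). unfold Wsol. fold a b.
  set (x := exp a * cos b). set (y := exp a * sin b).
  assert (Hm : 0 < exp a) by apply exp_pos.
  assert (Ex : x = exp a * cos b) by reflexivity.
  assert (Ey : y = exp a * sin b) by reflexivity.
  destruct HS as [Hb' [E1 E2]].
  assert (Hn : ~ (y = 0 /\ x < -1)).
  { intros [Hy Hx]. destruct (al_zero _ _ _ Hm Hb' Ey Hy) as [H0|H0]; [|lra].
    rewrite H0, cos_0 in Ex. lra. }
  split.
  - apply (proj2 (region_iff k x y b (exp a) Hm Hb' Ex Ey Hn)). fold y in E2. lra.
  - rewrite (fw_polar _ _ _ _ Ex Ey). unfold z. fold y in E2. rewrite E2.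
    rewrite <- exp_plus. fold x in E1. rewrite E1. reflexivity.
Qed.

Lemma flim_eps {X} (F : (X -> Prop) -> Prop) {FF : Filter F} (f : X -> R) y :
  filterlim f F (locally y) -> forall eps, 0 < eps -> F (fun t => Rabs (f t - y) < eps).
Proof.
  intros H eps He. apply (proj1 (filterlim_locally f y)) with (eps := mkposreal eps He) in H.
  apply filter_imp with (2 := H). intros t Ht. exact Ht.
Qed.

Lemma eps_flim {X} (F : (X -> Prop) -> Prop) {FF : Filter F} (f : X -> R) y :
  (forall eps, 0 < eps -> F (fun t => Rabs (f t - y) < eps)) -> filterlim f F (locally y).
Proof.
  intros H. apply (proj2 (filterlim_locally f y)). intros [eps He].
  apply filter_imp with (2 := H eps He). intros t Ht. exact Ht.
Qed.

Lemma flim_plus {X} (F : (X -> Prop) -> Prop) {FF : Filter F} (f g : X -> R) a b :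
  filterlim f F (locally a) -> filterlim g F (locally b) -> filterlim (fun t => f t + g t) F (locally (a + b)).
Proof.
  intros Hf Hg. apply (filterlim_comp_2 f g Rplus Hf Hg (filterlim_plus a b)).
Qed.

Lemma flim_mult {X} (F : (X -> Prop) -> Prop) {FF : Filter F} (f g : X -> R) a b :
  filterlim f F (locally a) -> filterlim g F (locally b) -> filterlim (fun t => f t * g t) F (locally (a * b)).
Proof.
  intros Hf Hg. apply (filterlim_comp_2 f g Rmult Hf Hg (filterlim_mult a b)).
Qed.

Lemma flim_opp {X} (F : (X -> Prop) -> Prop) {FF : Filter F} (f : X -> R) a :
  filterlim f F (locally a) -> filterlim (fun t => - f t) F (locally (- a)).
Proof.
  intros Hf. apply (filterlim_comp _ _ _ f Ropp F (locally a) (locally (- a)) Hf (filterlim_opp a)).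
Qed.

Lemma flim_cont {X} (F : (X -> Prop) -> Prop) {FF : Filter F} (f : X -> R) (h : R -> R) a :
  filterlim f F (locally a) -> continuous h a -> filterlim (fun t => h (f t)) F (locally (h a)).
Proof.
  intros Hf Hh. apply (filterlim_comp _ _ _ f h F (locally a) (locally (h a)) Hf Hh).
Qed.

Lemma hfun_T_cont T0 b : 0 < b < PI -> b < T0 -> continuous (fun T => hfun T b) T0.
Proof.
  intros Hb HT. assert (0 < sin b) by (apply sin_gt_0; lra).
  apply (@ex_derive_continuous R_AbsRing R_NormedModule (fun T => hfun T b)). unfold hfun. auto_derive.
  repeat split; try lra. apply Rdiv_lt_0_compat; lra.
Qed.

Lemma b_cont_pos {X} (F : (X -> Prop) -> Prop) {FF : Filter F} (Lf Tf : X -> R) L0 T0 :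
  -1 < L0 -> 0 < T0 -> filterlim Lf F (locally L0) -> filterlim Tf F (locally T0) ->
  forall eps, 0 < eps -> F (fun t => Rabs (snd (solP (Lf t) (Tf t)) - snd (solP L0 T0)) < eps).
Proof.
  intros HL HT HLf HTf eps Heps. pose proof PI_RGT_0 as HPI.
  pose proof (solP_spec L0 T0 HL) as HS0.
  set (b0 := snd (solP L0 T0)) in *.
  assert (Hb0 : 0 < b0).
  { destruct (sys_sign _ _ _ _ HL HS0) as [_ [S2 S3]].
    destruct (Rtotal_order b0 0) as [H|[H|H]]; [specialize (S2 H); lra| specialize (S3 H); lra| exact H]. }
  destruct (sys_pos _ _ _ _ HL HS0 Hb0) as [Hb1 [Hb2 [Hb3 _]]].
  set (e := Rmin eps (Rmin (b0 / 2) (Rmin ((PI - b0) / 2) ((T0 - b0) / 2)))).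
  assert (He1 : e <= eps) by apply Rmin_l.
  assert (He2 : e <= b0 / 2) by (eapply Rle_trans; [apply Rmin_r|apply Rmin_l]).
  assert (He3 : e <= (PI - b0) / 2) by (eapply Rle_trans; [apply Rmin_r|]; eapply Rle_trans; [apply Rmin_r|apply Rmin_l]).
  assert (He4 : e <= (T0 - b0) / 2) by (eapply Rle_trans; [apply Rmin_r|]; eapply Rle_trans; [apply Rmin_r|apply Rmin_r]).
  assert (He0 : 0 < e).
  { unfold e. repeat apply Rmin_glb_lt; lra. }
  set (bm := b0 - e). set (bp := b0 + e).
  assert (Hbb : 0 < bm /\ bm < b0 /\ b0 < bp /\ bp < PI /\ bp < T0 /\ b0 - bm <= eps /\ bp - b0 <= eps)
    by (unfold bm, bp; lra).
  assert (G1 : L0 < hfun T0 bm) by (rewrite <- Hb3; apply hfun_decr; unfold bm; lra).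
  assert (G2 : hfun T0 bp < L0) by (rewrite <- Hb3; apply hfun_decr; unfold bp; lra).
  set (gap := Rmin (hfun T0 bm - L0) (L0 - hfun T0 bp) / 2).
  assert (Hg1 : gap <= (hfun T0 bm - L0) / 2) by (unfold gap; unfold Rdiv; apply Rmult_le_compat_r; [lra|apply Rmin_l]).
  assert (Hg2 : gap <= (L0 - hfun T0 bp) / 2) by (unfold gap; unfold Rdiv; apply Rmult_le_compat_r; [lra|apply Rmin_r]).
  assert (Hg0 : 0 < gap) by (unfold gap; apply Rdiv_lt_0_compat; [apply Rmin_glb_lt|]; lra).
  pose proof (flim_eps F Lf L0 HLf gap Hg0) as E1.
  pose proof (flim_eps F Lf L0 HLf (L0 + 1) ltac:(lra)) as E2.
  pose proof (flim_eps F Tf T0 HTf (T0 - bp) ltac:(unfold bp; lra)) as E3.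
  pose proof (flim_eps F _ _ (flim_cont F Tf (fun T => hfun T bm) T0 HTf
                (hfun_T_cont T0 bm ltac:(unfold bm; lra) ltac:(unfold bm; lra))) gap Hg0) as E4.
  pose proof (flim_eps F _ _ (flim_cont F Tf (fun T => hfun T bp) T0 HTf
                (hfun_T_cont T0 bp ltac:(unfold bp; lra) ltac:(unfold bp; lra))) gap Hg0) as E5.
  generalize (filter_and _ _ E1 (filter_and _ _ E2 (filter_and _ _ E3 (filter_and _ _ E4 E5)))).
  apply filter_imp. intros t [F1 [F2 [F3 [F4 F5]]]].
  apply Rabs_def2 in F1. apply Rabs_def2 in F2. apply Rabs_def2 in F3.
  apply Rabs_def2 in F4. apply Rabs_def2 in F5.
  assert (HLt : -1 < Lf t) by lra.
  pose proof (solP_spec (Lf t) (Tf t) HLt) as HS.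
  set (b := snd (solP (Lf t) (Tf t))) in *.
  assert (Hbp : 0 < b).
  { destruct (sys_sign _ _ _ _ HLt HS) as [_ [S2 S3]].
    destruct (Rtotal_order b 0) as [H|[H|H]]; [specialize (S2 H); lra| specialize (S3 H); lra| exact H]. }
  destruct (sys_pos _ _ _ _ HLt HS Hbp) as [Hc1 [Hc2 [Hc3 _]]].
  apply Rabs_def1.
  - destruct (Rlt_or_le b bp) as [H|H]; [lra|exfalso].
    destruct (Req_dec b bp) as [Heq|Hne].
    + rewrite Heq in Hc3. lra.
    + pose proof (hfun_decr (Tf t) bp b ltac:(unfold bp; lra) ltac:(lra) Hc2 Hc1). lra.
  - destruct (Rlt_or_le bm b) as [H|H]; [lra|exfalso].
    destruct (Req_dec b bm) as [Heq|Hne].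
    + rewrite Heq in Hc3. lra.
    + pose proof (hfun_decr (Tf t) b bm Hbp ltac:(lra) ltac:(unfold bm; lra) ltac:(unfold bm; lra)). lra.
Qed.

Lemma cont_R (h : R -> R) x : ex_derive h x -> continuous h x.
Proof. intros H. apply (@ex_derive_continuous R_AbsRing R_NormedModule h x H). Qed.

Lemma solP_neg L T : -1 < L -> solP L T = (fst (solP L (- T)), - snd (solP L (- T))).
Proof.
  intros HL. pose proof (solP_spec L (- T) HL) as H1.
  pose proof (sys_b_range _ _ _ _ HL H1) as Hr.
  pose proof (sys_neg _ _ _ _ H1 ltac:(lra)) as H2. rewrite Ropp_involutive in H2.
  destruct (sys_unique _ _ _ _ _ _ HL (solP_spec L T HL) H2) as [E1 E2].
  apply injective_projections; simpl; assumption.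
Qed.

Lemma sys_b_zero L a b : -1 < L -> Sys L 0 a b -> b = 0.
Proof.
  intros HL HS. destruct (sys_sign _ _ _ _ HL HS) as [S1 [S2 _]].
  destruct (Rtotal_order b 0) as [H|[H|H]]; [specialize (S2 H); lra| exact H| specialize (S1 H); lra].
Qed.

Lemma sys_b_abs L T a b : -1 < L -> Sys L T a b -> Rabs b <= Rabs T.
Proof.
  intros HL HS. destruct (sys_sign _ _ _ _ HL HS) as [S1 [S2 S3]].
  destruct (Rtotal_order b 0) as [H|[H|H]].
  - specialize (S2 H). rewrite !Rabs_left by lra. lra.
  - specialize (S3 H). subst. rewrite Rabs_R0. lra.
  - specialize (S1 H). rewrite !Rabs_right by lra. lra.
Qed.

Lemma b_cont {X} (F : (X -> Prop) -> Prop) {FF : Filter F} (Lf Tf : X -> R) L0 T0 :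
  -1 < L0 -> filterlim Lf F (locally L0) -> filterlim Tf F (locally T0) ->
  filterlim (fun t => snd (solP (Lf t) (Tf t))) F (locally (snd (solP L0 T0))).
Proof.
  intros HL HLf HTf. apply (eps_flim F). intros eps Heps.
  pose proof (flim_eps F Lf L0 HLf (L0 + 1) ltac:(lra)) as EL.
  destruct (Rtotal_order T0 0) as [HT|[HT|HT]].
  - pose proof (b_cont_pos F Lf (fun t => - Tf t) L0 (- T0) HL ltac:(lra) HLf
                  (flim_opp F Tf T0 HTf) eps Heps) as E.
    generalize (filter_and _ _ EL E). apply filter_imp. intros t [H1 H2].
    apply Rabs_def2 in H1. rewrite (solP_neg (Lf t) (Tf t)) by lra. rewrite (solP_neg L0 T0) by lra.
    simpl. replace (- snd (solP (Lf t) (- Tf t)) - - snd (solP L0 (- T0)))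
      with (- (snd (solP (Lf t) (- Tf t)) - snd (solP L0 (- T0)))) by ring.
    rewrite Rabs_Ropp. exact H2.
  - subst T0. pose proof (flim_eps F Tf 0 HTf eps Heps) as ET.
    generalize (filter_and _ _ EL ET). apply filter_imp. intros t [H1 H2].
    apply Rabs_def2 in H1.
    rewrite (sys_b_zero L0 _ _ HL (solP_spec L0 0 HL)).
    assert (HLt : -1 < Lf t) by lra.
    pose proof (sys_b_abs _ _ _ _ HLt (solP_spec (Lf t) (Tf t) HLt)).
    rewrite Rminus_0_r in *. lra.
  - apply (b_cont_pos F Lf Tf L0 T0 HL HT HLf HTf eps Heps).
Qed.

Lemma sin_nz b : - PI < b < PI -> b <> 0 -> sin b <> 0.
Proof.
  intros Hb Hn. destruct (Rtotal_order b 0) as [H|[H|H]].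
  - assert (sin b < 0) by (apply sin_lt_0_var; lra). lra.
  - congruence.
  - assert (0 < sin b) by (apply sin_gt_0; lra). lra.
Qed.

Lemma Wsol_formula L T : -1 < L -> snd (solP L T) <> 0 ->
  Wsol L T = ((T - snd (solP L T)) * (cos (snd (solP L T)) / sin (snd (solP L T))), T - snd (solP L T)).
Proof.
  intros HL Hb. pose proof (solP_spec L T HL) as HS.
  pose proof (sys_b_range _ _ _ _ HL HS) as Hr.
  pose proof (sin_nz _ Hr Hb) as Hs.
  unfold Wsol. destruct HS as [_ [E1 E2]].
  set (a := fst (solP L T)) in *. set (b := snd (solP L T)) in *.
  assert (Ea : exp a = (T - b) / sin b) by (rewrite <- E2; field; exact Hs).
  rewrite Ea. f_equal; field; exact Hs.
Qed.

Lemma Cmod_le_sum a b : Cmod (a, b) <= Rabs a + Rabs b.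
Proof.
  unfold Cmod. simpl fst; simpl snd.
  rewrite <- (sqrt_Rsqr (Rabs a + Rabs b)) by (pose proof (Rabs_pos a); pose proof (Rabs_pos b); lra).
  apply sqrt_le_1_alt. unfold Rsqr.
  pose proof (Rabs_pos a). pose proof (Rabs_pos b).
  assert (a ^ 2 = Rabs a * Rabs a) by (rewrite <- Rabs_mult; simpl; rewrite Rmult_1_r; rewrite Rabs_right; [ring|nra]).
  assert (b ^ 2 = Rabs b * Rabs b) by (rewrite <- Rabs_mult; simpl; rewrite Rmult_1_r; rewrite Rabs_right; [ring|nra]).
  nra.
Qed.

Lemma phi_incr u v : 0 <= u -> u < v -> u * exp u < v * exp v.
Proof.
  intros Hu Huv. pose proof (exp_increasing _ _ Huv). pose proof (exp_pos u). pose proof (exp_pos v). nra.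
Qed.

Lemma W_cont {X} (F : (X -> Prop) -> Prop) {FF : Filter F} (Lf Tf : X -> R) L0 T0 :
  -1 < L0 -> filterlim Lf F (locally L0) -> filterlim Tf F (locally T0) ->
  forall eps, 0 < eps -> F (fun t => Cmod (Cminus (Wsol (Lf t) (Tf t)) (Wsol L0 T0)) < eps).
Proof.
  intros HL HLf HTf eps Heps. pose proof PI_RGT_0 as HPI.
  pose proof (flim_eps F Lf L0 HLf (L0 + 1) ltac:(lra)) as EL.
  pose proof (b_cont F Lf Tf L0 T0 HL HLf HTf) as Hbc.
  set (bf := fun t => snd (solP (Lf t) (Tf t))) in *.
  pose proof (solP_spec L0 T0 HL) as HS0.
  set (b0 := snd (solP L0 T0)) in *.
  pose proof (sys_b_range _ _ _ _ HL HS0) as Hr0.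
  destruct (Req_dec T0 0) as [HT0|HT0].
  -
    subst T0. assert (Hb0 : b0 = 0) by (apply (sys_b_zero L0 _ _ HL HS0)).
    set (a0 := fst (solP L0 0)) in *.
    assert (HW0 : Wsol L0 0 = (exp a0, 0)).
    { unfold Wsol. fold a0 b0. rewrite Hb0, cos_0, sin_0. f_equal; ring. }
    rewrite HW0.
    destruct HS0 as [_ [E01 _]]. rewrite Hb0, cos_0, Rmult_1_r in E01.
    set (x0 := exp a0).
    assert (Hx0 : 0 < x0) by apply exp_pos.
    assert (Hphi0 : x0 * exp x0 = exp L0).
    { unfold x0. rewrite <- exp_plus. rewrite E01. reflexivity. }
    set (e := Rmin (eps / 2) (x0 / 2)).
    assert (He1 : e <= eps / 2) by apply Rmin_l.
    assert (He2 : e <= x0 / 2) by apply Rmin_r.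
    assert (He0 : 0 < e) by (apply Rmin_glb_lt; lra).
    pose proof (phi_incr (x0 - e) x0 ltac:(lra) ltac:(lra)) as P1.
    pose proof (phi_incr x0 (x0 + e) ltac:(lra) ltac:(lra)) as P2.
    set (gap := Rmin (exp L0 - (x0 - e) * exp (x0 - e)) ((x0 + e) * exp (x0 + e) - exp L0)).
    assert (Hg1 : gap <= exp L0 - (x0 - e) * exp (x0 - e)) by apply Rmin_l.
    assert (Hg2 : gap <= (x0 + e) * exp (x0 + e) - exp L0) by apply Rmin_r.
    assert (Hg0 : 0 < gap) by (apply Rmin_glb_lt; lra).
    assert (Hlim : filterlim (fun t => exp (Lf t) * cos (bf t)) F (locally (exp L0 * cos 0))).
    { apply (flim_mult F).
      - apply (flim_cont F); [exact HLf|]. apply cont_R. auto_derive. exact I.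
      - rewrite <- Hb0. apply (flim_cont F); [exact Hbc|]. apply cont_R. auto_derive. exact I. }
    rewrite cos_0, Rmult_1_r in Hlim.
    pose proof (flim_eps F _ _ Hlim gap Hg0) as E1.
    rewrite Hb0 in Hbc.
    pose proof (flim_eps F _ _ Hbc (Rmin (PI / 2) (eps / 4)) ltac:(apply Rmin_glb_lt; lra)) as E2.
    pose proof (flim_eps F _ _ HTf (eps / 4) ltac:(lra)) as E3.
    generalize (filter_and _ _ EL (filter_and _ _ E1 (filter_and _ _ E2 E3))).
    apply filter_imp. intros t [H1 [H2 [H3 H4]]].
    apply Rabs_def2 in H1. apply Rabs_def2 in H2.
    rewrite Rminus_0_r in H3, H4.
    assert (H3a : Rabs (bf t) < PI / 2) by (eapply Rlt_le_trans; [exact H3| apply Rmin_l]).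
    assert (H3b : Rabs (bf t) < eps / 4) by (eapply Rlt_le_trans; [exact H3| apply Rmin_r]).
    assert (HLt : -1 < Lf t) by lra.
    pose proof (solP_spec (Lf t) (Tf t) HLt) as HS.
    unfold Wsol. fold (bf t) in *. set (a := fst (solP (Lf t) (Tf t))) in *.
    set (b := bf t) in *.
    destruct HS as [_ [Ea Eb]].
    apply Rabs_def2 in H3a.
    assert (Hcb : 0 < cos b) by (apply cos_gt_0; lra).
    set (x := exp a * cos b).
    assert (Hx : 0 < x) by (unfold x; apply Rmult_lt_0_compat; [apply exp_pos|exact Hcb]).
    assert (Hphi : x * exp x = exp (Lf t) * cos b).
    { unfold x. rewrite <- Ea. rewrite exp_plus. ring. }
    assert (Hxr : Rabs (x - x0) < e).
    { apply Rabs_def1.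
      - destruct (Rlt_or_le x (x0 + e)) as [H|H]; [lra|exfalso].
        destruct (Req_dec x (x0 + e)) as [Hq|Hq].
        + rewrite Hq in Hphi. lra.
        + pose proof (phi_incr (x0 + e) x ltac:(lra) ltac:(lra)). lra.
      - destruct (Rlt_or_le (x0 - e) x) as [H|H]; [lra|exfalso].
        destruct (Req_dec x (x0 - e)) as [Hq|Hq].
        + rewrite Hq in Hphi. lra.
        + pose proof (phi_incr x (x0 - e) ltac:(lra) ltac:(lra)). lra. }
    eapply Rle_lt_trans; [apply Cmod_le_sum|].
    unfold Cminus, Cplus, Copp. simpl fst. simpl snd. fold x.
    assert (Hy : exp a * sin b = Tf t - b) by lra.
    rewrite Hy.
    replace (Tf t - b + - 0) with (Tf t - b) by ring.
    pose proof (Rabs_triang (Tf t) (- b)). rewrite Rabs_Ropp in H.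
    unfold Rminus in *. lra.
  -
    assert (Hb0 : b0 <> 0).
    { intros Hb. destruct (sys_sign _ _ _ _ HL HS0) as [_ [_ S3]]. apply HT0. apply S3. exact Hb. }
    pose proof (sin_nz _ Hr0 Hb0) as Hs0.
    rewrite (Wsol_formula L0 T0 HL Hb0). fold b0.
    assert (Hxl : filterlim (fun t => (Tf t + - bf t) * (cos (bf t) / sin (bf t))) F
                    (locally ((T0 + - b0) * (cos b0 / sin b0)))).
    { apply (flim_mult F); [apply (flim_plus F); [exact HTf| apply (flim_opp F); exact Hbc]|].
      apply (flim_cont F bf (fun u => cos u / sin u)); [exact Hbc|]. apply cont_R. auto_derive. exact Hs0. }
    assert (Hyl : filterlim (fun t => Tf t + - bf t) F (locally (T0 + - b0))).
    { apply (flim_plus F); [exact HTf| apply (flim_opp F); exact Hbc]. }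
    pose proof (flim_eps F _ _ Hxl (eps / 2) ltac:(lra)) as E1.
    pose proof (flim_eps F _ _ Hyl (eps / 2) ltac:(lra)) as E2.
    pose proof (flim_eps F _ _ Hbc (Rabs b0) ltac:(apply Rabs_pos_lt; exact Hb0)) as E3.
    generalize (filter_and _ _ EL (filter_and _ _ E1 (filter_and _ _ E2 E3))).
    apply filter_imp. intros t [H1 [H2 [H3 H4]]].
    apply Rabs_def2 in H1.
    assert (Hbt : bf t <> 0).
    { intros Hq. rewrite Hq in H4. rewrite Rminus_0_l, Rabs_Ropp in H4. lra. }
    rewrite (Wsol_formula (Lf t) (Tf t) ltac:(lra) Hbt). fold (bf t).
    eapply Rle_lt_trans; [apply Cmod_le_sum|].
    unfold Cminus, Cplus, Copp. simpl fst. simpl snd.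
    unfold Rminus in *. lra.
Qed.

Lemma exp_le_inv s : s < 1 -> exp s <= 1 / (1 - s).
Proof.
  intros Hs. pose proof (exp_ineq1_le (- s)) as H. rewrite exp_Ropp in H.
  pose proof (exp_pos s).
  apply Rmult_le_reg_r with (1 - s); [lra|].
  replace (1 / (1 - s) * (1 - s)) with 1 by (field; lra).
  apply Rmult_le_compat_l with (r := exp s) in H; [|lra].
  rewrite Rinv_r in H by lra. lra.
Qed.

Lemma exp_quad s : Rabs s <= 1 / 2 -> Rabs (exp s - 1 - s) <= 2 * s ^ 2.
Proof.
  intros Hs. apply Rabs_le_between in Hs.
  pose proof (exp_ineq1_le s). pose proof (exp_le_inv s ltac:(lra)).
  assert (1 / (1 - s) - 1 - s = s ^ 2 / (1 - s)) by (field; lra).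
  assert (s ^ 2 / (1 - s) <= 2 * s ^ 2).
  { apply Rmult_le_reg_r with (1 - s); [lra|].
    replace (s ^ 2 / (1 - s) * (1 - s)) with (s ^ 2) by (field; lra). nra. }
  rewrite Rabs_right by lra. lra.
Qed.

Lemma exp_lin s : Rabs s <= 1 / 2 -> Rabs (exp s - 1) <= 2 * Rabs s.
Proof.
  intros Hs. pose proof (exp_quad s Hs). apply Rabs_le_between in H.
  pose proof (Rabs_pos s). apply Rabs_le_between in Hs.
  apply Rabs_le_between. split.
  - destruct (Rle_or_lt 0 s); [rewrite Rabs_right by lra| rewrite Rabs_left by lra]; nra.
  - destruct (Rle_or_lt 0 s); [rewrite Rabs_right by lra| rewrite Rabs_left by lra]; nra.
Qed.

Lemma exp_half s : Rabs s <= 1 / 2 -> exp s <= 2.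
Proof.
  intros Hs. apply Rabs_le_between in Hs. pose proof (exp_le_inv s ltac:(lra)).
  assert (1 / (1 - s) <= 2).
  { apply Rmult_le_reg_r with (1 - s); [lra|].
    replace (1 / (1 - s) * (1 - s)) with 1 by (field; lra). lra. }
  lra.
Qed.

Lemma cos_quad t : Rabs t <= 1 / 2 -> Rabs (cos t - 1) <= t ^ 2 / 2.
Proof.
  intros Ht. apply Rabs_le_between in Ht.
  destruct (pre_cos_bound t 0 ltac:(lra) ltac:(lra)) as [H1 _].
  replace (cos_approx t (2 * 0 + 1)) with (1 - t ^ 2 / 2) in H1
    by (unfold cos_approx, cos_term; simpl; field).
  pose proof (COS_bound t).
  rewrite Rabs_left1 by lra. lra.
Qed.

Lemma sin_cub_pos t : 0 <= t <= 1 / 2 -> Rabs (sin t - t) <= t ^ 2.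
Proof.
  intros Ht.
  destruct (pre_sin_bound t 0 ltac:(lra) ltac:(lra)) as [H1 H2].
  replace (sin_approx t (2 * 0 + 1)) with (t - t ^ 3 / 6) in H1
    by (unfold sin_approx, sin_term; simpl; field).
  replace (sin_approx t (2 * (0 + 1))) with (t - t ^ 3 / 6 + t ^ 5 / 120) in H2
    by (unfold sin_approx, sin_term; simpl; field).
  assert (A1 : 0 <= t ^ 2) by nra.
  assert (A2 : t ^ 3 = t * t ^ 2) by ring. assert (A3 : t ^ 5 = t ^ 2 * t ^ 3) by ring.
  assert (A4 : 0 <= t ^ 3) by (rewrite A2; nra).
  assert (A5 : t ^ 3 <= t ^ 2) by (rewrite A2; nra).
  assert (A6 : t ^ 5 <= t ^ 3) by (rewrite A3; assert (t ^ 2 <= 1) by nra; nra).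
  apply Rabs_le_between. split; lra.
Qed.

Lemma sin_cub t : Rabs t <= 1 / 2 -> Rabs (sin t - t) <= t ^ 2.
Proof.
  intros Ht. apply Rabs_le_between in Ht.
  destruct (Rle_or_lt 0 t).
  - apply sin_cub_pos; lra.
  - pose proof (sin_cub_pos (- t) ltac:(lra)). rewrite sin_neg in H0.
    replace (- sin t - - t) with (- (sin t - t)) in H0 by ring. rewrite Rabs_Ropp in H0.
    replace ((- t) ^ 2) with (t ^ 2) in H0 by ring. exact H0.
Qed.

Lemma cmod_parts (h : C) : Rabs (fst h) <= Cmod h /\ Rabs (snd h) <= Cmod h.
Proof.
  pose proof (Rmax_Cmod h). split.
  - eapply Rle_trans; [apply Rmax_l|exact H].
  - eapply Rle_trans; [apply Rmax_r|exact H].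
Qed.

Lemma cexp_bound (h : C) : Cmod h <= 1 / 2 ->
  Cmod (Cminus (Cminus (cexp h) 1) h) <= 7 * Cmod h ^ 2 /\ Cmod (Cminus (cexp h) 1) <= 5 * Cmod h.
Proof.
  intros Hh. destruct h as [s t]. set (m := Cmod (s, t)) in *.
  destruct (cmod_parts (s, t)) as [Hs Ht]. simpl fst in Hs. simpl snd in Ht. fold m in Hs, Ht.
  assert (Hs2 : Rabs s <= 1 / 2) by lra. assert (Ht2 : Rabs t <= 1 / 2) by lra.
  pose proof (exp_quad s Hs2) as Q1. pose proof (exp_lin s Hs2) as Q2.
  pose proof (exp_half s Hs2) as Q3. pose proof (cos_quad t Ht2) as Q4.
  pose proof (sin_cub t Ht2) as Q5. pose proof (exp_pos s) as Q6.
  pose proof (Rabs_pos s). pose proof (Rabs_pos t).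
  assert (Es : s ^ 2 <= m ^ 2).
  { replace (s ^ 2) with (Rabs s * Rabs s) by (rewrite <- Rabs_mult; rewrite Rabs_right; [ring|nra]). nra. }
  assert (Et : t ^ 2 <= m ^ 2).
  { replace (t ^ 2) with (Rabs t * Rabs t) by (rewrite <- Rabs_mult; rewrite Rabs_right; [ring|nra]). nra. }
  assert (R1 : Rabs (exp s * cos t - 1 - s) <= 3 * m ^ 2).
  { replace (exp s * cos t - 1 - s) with (exp s * (cos t - 1) + (exp s - 1 - s)) by ring.
    eapply Rle_trans; [apply Rabs_triang|]. rewrite Rabs_mult, (Rabs_right (exp s)) by lra.
    pose proof (Rabs_pos (cos t - 1)). nra. }
  assert (R2 : Rabs (exp s * sin t - t) <= 4 * m ^ 2).
  { replace (exp s * sin t - t) with (exp s * (sin t - t) + (exp s - 1) * t) by ring.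
    eapply Rle_trans; [apply Rabs_triang|]. rewrite !Rabs_mult, (Rabs_right (exp s)) by lra.
    pose proof (Rabs_pos (sin t - t)). pose proof (Rabs_pos (exp s - 1)). nra. }
  assert (E1 : Cminus (Cminus (cexp (s, t)) 1) (s, t) = (exp s * cos t - 1 - s, exp s * sin t - t)).
  { unfold Cminus, Cplus, Copp, cexp, RtoC, Re, Im. simpl. f_equal; ring. }
  assert (C1 : Cmod (Cminus (Cminus (cexp (s, t)) 1) (s, t)) <= 7 * m ^ 2).
  { rewrite E1. eapply Rle_trans; [apply Cmod_le_sum|]. lra. }
  split; [exact C1|].
  replace (Cminus (cexp (s, t)) 1) with (Cplus (Cminus (Cminus (cexp (s, t)) 1) (s, t)) (s, t))
    by (unfold Cminus, Cplus, Copp; simpl; f_equal; ring).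
  eapply Rle_trans; [apply Cmod_triangle|]. fold m. nra.
Qed.

Definition fW (w : C) : C := Cmult w (cexp w).

Lemma cexp_add u v : cexp (Cplus u v) = Cmult (cexp u) (cexp v).
Proof.
  destruct u as [a b], v as [c d]. unfold cexp, Cplus, Cmult, Re, Im. simpl.
  rewrite exp_plus, cos_plus, sin_plus. f_equal; ring.
Qed.

Lemma Cmod_cexp w : Cmod (cexp w) = exp (fst w).
Proof.
  destruct w as [a b]. unfold Cmod, cexp, Re, Im. simpl.
  replace ((exp a * cos b) * ((exp a * cos b) * 1) + (exp a * sin b) * ((exp a * sin b) * 1))
    with (exp a * exp a) by (pose proof (sin2_cos2 b); unfold Rsqr in H;
      transitivity (exp a * exp a * (sin b * sin b + cos b * cos b)); [rewrite H; ring| ring]).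
  apply sqrt_square. pose proof (exp_pos a). lra.
Qed.

Lemma cexp_nz w : cexp w <> 0%C.
Proof.
  intros H. pose proof (Cmod_cexp w). rewrite H, Cmod_0 in H0. pose proof (exp_pos (fst w)). lra.
Qed.

Lemma f_expand W0 : forall eps, 0 < eps -> exists eta, 0 < eta /\ forall w,
  Cmod (Cminus w W0) < eta ->
  Cmod (Cminus (Cminus (fW w) (fW W0)) (Cmult (Cmult (cexp W0) (Cplus 1 W0)) (Cminus w W0)))
    <= eps * Cmod (Cminus w W0).
Proof.
  intros eps Heps.
  set (E0 := Cmod (cexp W0)). set (M := Cmod W0).
  assert (HE0 : 0 <= E0) by apply Cmod_ge_0. assert (HM : 0 <= M) by apply Cmod_ge_0.
  set (K := E0 * (7 * M + 5)).
  assert (HK : 0 <= K) by (unfold K; apply Rmult_le_pos; lra).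
  exists (Rmin (1 / 2) (eps / (K + 1))). split.
  { apply Rmin_glb_lt; [lra|]. apply Rdiv_lt_0_compat; lra. }
  intros w Hw.
  assert (Hw1 : Cmod (Cminus w W0) <= 1 / 2) by (eapply Rlt_le, Rlt_le_trans; [exact Hw| apply Rmin_l]).
  assert (Hw2 : Cmod (Cminus w W0) < eps / (K + 1)) by (eapply Rlt_le_trans; [exact Hw| apply Rmin_r]).
  set (h := Cminus w W0) in *.
  assert (Hwh : w = Cplus W0 h) by (unfold h, Cminus; ring).
  assert (Eid : Cminus (Cminus (fW w) (fW W0)) (Cmult (Cmult (cexp W0) (Cplus 1 W0)) h)
      = Cmult (cexp W0) (Cplus (Cmult W0 (Cminus (Cminus (cexp h) 1) h)) (Cmult h (Cminus (cexp h) 1)))).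
  { unfold fW. rewrite Hwh at 1 2. rewrite cexp_add. unfold Cminus. ring. }
  rewrite Eid. destruct (cexp_bound h Hw1) as [B1 B2].
  set (m := Cmod h) in *.
  assert (Hm : 0 <= m) by apply Cmod_ge_0.
  rewrite Cmod_mult. fold E0.
  assert (Hin : Cmod (Cplus (Cmult W0 (Cminus (Cminus (cexp h) 1) h)) (Cmult h (Cminus (cexp h) 1)))
      <= (7 * M + 5) * m ^ 2).
  { eapply Rle_trans; [apply Cmod_triangle|]. rewrite !Cmod_mult. fold M m.
    pose proof (Cmod_ge_0 (Cminus (Cminus (cexp h) 1) h)).
    pose proof (Cmod_ge_0 (Cminus (cexp h) 1)). nra. }
  assert (E0 * Cmod (Cplus (Cmult W0 (Cminus (Cminus (cexp h) 1) h)) (Cmult h (Cminus (cexp h) 1)))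
      <= K * m ^ 2) by (unfold K; rewrite Rmult_assoc; apply Rmult_le_compat_l; lra).
  assert (K * m <= eps).
  { apply Rle_trans with (K * (eps / (K + 1))); [apply Rmult_le_compat_l; lra|].
    apply Rmult_le_reg_r with (K + 1); [lra|].
    replace (K * (eps / (K + 1)) * (K + 1)) with (K * eps) by (field; lra). nra. }
  nra.
Qed.

Lemma inv_core W0 : Cplus 1 W0 <> 0%C -> forall eps, 0 < eps -> exists eta, 0 < eta /\ forall w,
  Cmod (Cminus w W0) < eta ->
  Cmod (Cminus (Cminus w W0) (Cmult (Cminus (fW w) (fW W0)) (Cinv (Cmult (cexp W0) (Cplus 1 W0)))))
    <= eps * Cmod (Cminus (fW w) (fW W0)).
Proof.
  intros H1 eps Heps.
  set (D := Cmult (cexp W0) (Cplus 1 W0)).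
  assert (HD : D <> 0%C).
  { unfold D. intros H.
    assert (Hc : Cmod (Cmult (cexp W0) (Cplus 1 W0)) = 0) by (rewrite H; apply Cmod_0).
    rewrite Cmod_mult in Hc. apply Rmult_integral in Hc. clear H. rename Hc into H. destruct H as [H|H].
    - apply Cmod_eq_0 in H. exact (cexp_nz W0 H).
    - apply Cmod_eq_0 in H. exact (H1 H). }
  set (dl := Cmod D). assert (Hdl : 0 < dl) by (apply Cmod_gt_0; exact HD).
  set (e1 := Rmin (dl / 2) (eps * dl * dl / 2)).
  assert (He1 : 0 < e1) by (apply Rmin_glb_lt; [lra|]; apply Rdiv_lt_0_compat; [|lra]; apply Rmult_lt_0_compat; [apply Rmult_lt_0_compat|]; lra).
  assert (He2 : e1 <= dl / 2) by apply Rmin_l.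
  assert (He3 : e1 <= eps * dl * dl / 2) by apply Rmin_r.
  destruct (f_expand W0 e1 He1) as [eta [Heta Hexp]].
  exists eta. split; [exact Heta|]. intros w Hw. specialize (Hexp w Hw). fold D in Hexp.
  set (h := Cminus w W0) in *. set (Dz := Cminus (fW w) (fW W0)) in *.
  set (r := Cminus Dz (Cmult D h)) in *.
  assert (Eq1 : Cminus h (Cmult Dz (Cinv D)) = Copp (Cmult r (Cinv D))).
  { unfold r. field. exact HD. }
  rewrite Eq1, Cmod_opp, Cmod_mult, Cmod_inv by exact HD. fold dl.
  set (mh := Cmod h) in *. set (mz := Cmod Dz).
  assert (Hmh : 0 <= mh) by apply Cmod_ge_0.
  assert (Hlow : dl * mh - e1 * mh <= mz).
  { assert (Dz = Cplus (Cmult D h) r) by (unfold r, Cminus; ring).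
    pose proof (Cmod_triangle (Cplus (Cmult D h) r) (Copp r)).
    replace (Cplus (Cplus (Cmult D h) r) (Copp r)) with (Cmult D h) in H0 by ring.
    rewrite Cmod_opp, Cmod_mult in H0. fold dl mh in H0. rewrite <- H in H0. fold mz in H0. lra. }
  assert (Hmh2 : mh <= 2 * mz / dl).
  { apply Rmult_le_reg_r with dl; [lra|]. replace (2 * mz / dl * dl) with (2 * mz) by (field; lra). nra. }
  pose proof (Cmod_ge_0 r).
  apply Rle_trans with (e1 * mh / dl).
  - unfold Rdiv. apply Rmult_le_compat_r; [left; apply Rinv_0_lt_compat; lra| exact Hexp].
  - apply Rle_trans with ((eps * dl * dl / 2) * (2 * mz / dl) / dl).
    + unfold Rdiv. apply Rmult_le_compat_r; [left; apply Rinv_0_lt_compat; lra|].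
      apply Rmult_le_compat; lra.
    + right. field. lra.
Qed.

Lemma Wsol_f L T : -1 < L -> fW (Wsol L T) = (exp L * cos T, exp L * sin T).
Proof.
  intros HL. pose proof (solP_spec L T HL) as [_ [E1 E2]].
  unfold fW, Wsol.
  set (a := fst (solP L T)) in *. set (b := snd (solP L T)) in *.
  rewrite (fw_polar _ _ (exp a) b eq_refl eq_refl). rewrite E2, <- exp_plus, E1. reflexivity.
Qed.

Lemma Wsol_im L T : -1 < L -> Rabs (snd (Wsol L T)) <= Rabs T.
Proof.
  intros HL. pose proof (solP_spec L T HL) as HS.
  destruct (sys_sign _ _ _ _ HL HS) as [S1 [S2 S3]].
  destruct HS as [_ [_ E2]]. unfold Wsol. simpl snd.
  set (a := fst (solP L T)) in *. set (b := snd (solP L T)) in *.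
  assert (Ey : exp a * sin b = T - b) by lra. rewrite Ey.
  destruct (Rtotal_order b 0) as [H|[H|H]].
  - specialize (S2 H). rewrite !Rabs_left by lra. lra.
  - specialize (S3 H). rewrite S3, H. replace (0 - 0) with 0 by ring. rewrite Rabs_R0. lra.
  - specialize (S1 H). rewrite !Rabs_right by lra. lra.
Qed.

Lemma Wsol_mod L T : -1 < L -> Cmod (Wsol L T) * exp (fst (Wsol L T)) = exp L.
Proof.
  intros HL. pose proof (solP_spec L T HL) as [_ [E1 _]].
  unfold Wsol. simpl fst.
  set (a := fst (solP L T)) in *. set (b := snd (solP L T)) in *.
  assert (Cmod (exp a * cos b, exp a * sin b) = exp a).
  { unfold Cmod. simpl fst; simpl snd.
    replace ((exp a * cos b) ^ 2 + (exp a * sin b) ^ 2) with (exp a ^ 2).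
    - apply sqrt_pow2. pose proof (exp_pos a); lra.
    - pose proof (sin2_cos2 b). unfold Rsqr in H.
      transitivity (exp a ^ 2 * (sin b * sin b + cos b * cos b)); [rewrite H; ring| ring]. }
  rewrite H, <- exp_plus, E1. reflexivity.
Qed.

Lemma key_ineq x y Y : Y >= 1 -> Rabs y <= Y -> x < - / 2 ->
  (x ^ 2 + y ^ 2) * exp (2 * x) < (/ 2 + Y) ^ 2 * exp (-1).
Proof.
  intros HY Hy Hx.
  set (t := - x - / 2). assert (Ht : 0 < t) by (unfold t; lra).
  assert (E : exp (2 * x) = exp (-1) * (exp (- t) * exp (- t))).
  { rewrite <- !exp_plus. f_equal. unfold t. field. }
  assert (Et : exp t * exp (- t) = 1) by (rewrite <- exp_plus; replace (t + - t) with 0 by ring; apply exp_0).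
  pose proof (exp_ineq1_le t) as H1. pose proof (exp_pos t). pose proof (exp_pos (- t)).
  pose proof (exp_pos (-1)).
  assert (Hy2 : y ^ 2 <= Y ^ 2).
  { apply Rabs_le_between in Hy. nra. }
  assert (Hx2 : x ^ 2 = (/ 2 + t) ^ 2) by (unfold t; field).
  assert (A : (/ 2 + t) ^ 2 + Y ^ 2 < ((/ 2 + Y) * (1 + t)) ^ 2) by nra.
  assert (B : ((/ 2 + Y) * (1 + t)) ^ 2 <= ((/ 2 + Y) * exp t) ^ 2).
  { apply pow_incr. split; [nra|]. apply Rmult_le_compat_l; lra. }
  rewrite E.
  assert (C : (x ^ 2 + y ^ 2) < (/ 2 + Y) ^ 2 * (exp t * exp t)) by nra.
  assert (D : (x ^ 2 + y ^ 2) * (exp (- t) * exp (- t)) < (/ 2 + Y) ^ 2).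
  { apply Rmult_lt_compat_r with (r := exp (- t) * exp (- t)) in C; [|nra].
    replace ((/ 2 + Y) ^ 2 * (exp t * exp t) * (exp (- t) * exp (- t)))
      with ((/ 2 + Y) ^ 2 * ((exp t * exp (- t)) * (exp t * exp (- t)))) in C by ring.
    rewrite Et in C. lra. }
  replace ((x ^ 2 + y ^ 2) * (exp (-1) * (exp (- t) * exp (- t))))
    with (((x ^ 2 + y ^ 2) * (exp (- t) * exp (- t))) * exp (-1)) by ring.
  apply Rmult_lt_compat_r; lra.
Qed.

Lemma bound_main L T Y : -1 < L -> Y >= 1 -> Rabs T <= Y ->
  (/ 2 + Y) * exp (- / 2) <= exp L ->
  - / 2 <= fst (Wsol L T) /\
  Cmod (Cinv (Cmult (cexp (Wsol L T)) (Cplus 1 (Wsol L T)))) <= / exp L.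
Proof.
  intros HL HY HT Hc.
  set (W := Wsol L T).
  pose proof (Wsol_im L T HL) as Hy. fold W in Hy.
  pose proof (Wsol_mod L T HL) as Hm. fold W in Hm.
  destruct W as [x y] eqn:EW. simpl fst in *. simpl snd in *.
  assert (Hm2 : Cmod (x, y) ^ 2 = x ^ 2 + y ^ 2) by (rewrite Cmod2_alt; reflexivity).
  assert (Hx : - / 2 <= x).
  { destruct (Rle_or_lt (- / 2) x) as [H|H]; [exact H|exfalso].
    pose proof (key_ineq x y Y HY ltac:(lra) H) as K.
    assert (E1 : exp (2 * x) = exp x ^ 2) by (simpl; rewrite Rmult_1_r, <- exp_plus; f_equal; ring).
    assert (E2 : exp (-1) = exp (- / 2) ^ 2) by (simpl; rewrite Rmult_1_r, <- exp_plus; f_equal; field).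
    rewrite <- Hm2, E1, E2 in K.
    assert (K2 : (Cmod (x, y) * exp x) ^ 2 < ((/ 2 + Y) * exp (- / 2)) ^ 2) by (rewrite !Rpow_mult_distr; exact K).
    rewrite Hm in K2.
    pose proof (exp_pos (- / 2)). pose proof (exp_pos L).
    assert (0 <= (/ 2 + Y) * exp (- / 2)) by nra.
    nra. }
  split; [exact Hx|].
  assert (Hnz : Cplus 1 (x, y) <> 0%C).
  { intros H. injection H as H1 H2. simpl in H1. lra. }
  rewrite Cmod_inv.
  2: { intros H. assert (Hc0 : Cmod (Cmult (cexp (x, y)) (Cplus 1 (x, y))) = 0) by (rewrite H; apply Cmod_0).
       rewrite Cmod_mult in Hc0. apply Rmult_integral in Hc0. destruct Hc0 as [Hc0|Hc0].
       - apply Cmod_eq_0 in Hc0. exact (cexp_nz _ Hc0).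
       - apply Cmod_eq_0 in Hc0. exact (Hnz Hc0). }
  rewrite Cmod_mult, Cmod_cexp. simpl fst.
  assert (Hmod : Cmod (x, y) <= Cmod (Cplus 1 (x, y))).
  { unfold Cmod, Cplus. simpl fst; simpl snd. apply sqrt_le_1_alt. nra. }
  pose proof (exp_pos x). pose proof (exp_pos L).
  assert (0 < Cmod (x, y)) by (destruct (Rle_lt_dec (Cmod (x,y)) 0); [pose proof (Cmod_ge_0 (x,y)); nra| assumption]).
  rewrite <- Hm. apply Rinv_le_contravar; [apply Rmult_lt_0_compat; lra|].
  rewrite Rmult_comm. apply Rmult_le_compat_l; lra.
Qed.

Lemma expm1_half : exp (-1) < / 2.
Proof.
  pose proof (exp_ineq1 1 ltac:(lra)). replace (exp (-1)) with (/ exp 1) by (rewrite <- exp_Ropp; f_equal; ring). apply Rinv_lt_contravar; lra.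
Qed.

Lemma near_C (z0 : C) eta : 0 < eta ->
  @locally (AbsRing_UniformSpace C_AbsRing) z0 (fun z => Cmod (Cminus z z0) < eta).
Proof. intros H. exists (mkposreal eta H). intros y Hy. exact Hy. Qed.

Lemma near_R (x0 : R) eta : 0 < eta ->
  @locally (AbsRing_UniformSpace R_AbsRing) x0 (fun x => Rabs (x - x0) < eta).
Proof. intros H. exists (mkposreal eta H). intros y Hy. exact Hy. Qed.

Lemma flim_fst (z0 : C) : filterlim (fun z : C => fst z) (@locally (AbsRing_UniformSpace C_AbsRing) z0) (locally (fst z0)).
Proof.
  apply (eps_flim _). intros eps He. apply filter_imp with (2 := near_C z0 eps He).
  intros z Hz. destruct (cmod_parts (Cminus z z0)) as [H _].
  replace (fst (Cminus z z0)) with (fst z - fst z0) in H by (destruct z, z0; simpl; ring). lra.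
Qed.

Lemma flim_snd (z0 : C) : filterlim (fun z : C => snd z) (@locally (AbsRing_UniformSpace C_AbsRing) z0) (locally (snd z0)).
Proof.
  apply (eps_flim _). intros eps He. apply filter_imp with (2 := near_C z0 eps He).
  intros z Hz. destruct (cmod_parts (Cminus z z0)) as [_ H].
  replace (snd (Cminus z z0)) with (snd z - snd z0) in H by (destruct z, z0; simpl; ring). lra.
Qed.

Lemma flim_cmod (z0 : C) : filterlim (fun z : C => Cmod z) (@locally (AbsRing_UniformSpace C_AbsRing) z0) (locally (Cmod z0)).
Proof.
  apply (eps_flim _). intros eps He. apply filter_imp with (2 := near_C z0 eps He).
  intros z Hz. apply Rabs_def1.
  - pose proof (Cmod_triangle (Cminus z z0) z0).
    replace (Cplus (Cminus z z0) z0) with z in H by (destruct z, z0; unfold Cminus, Cplus, Copp; simpl; f_equal; ring). lra.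
  - pose proof (Cmod_triangle (Copp (Cminus z z0)) z).
    replace (Cplus (Copp (Cminus z z0)) z) with z0 in H by (destruct z, z0; unfold Cminus, Cplus, Copp; simpl; f_equal; ring).
    rewrite Cmod_opp in H. lra.
Qed.

Definition Tz (k : Z) (z : C) : R := 2 * atan (snd z / (Cmod z + fst z)) + 2 * IZR k * PI.

Lemma rep_noncut k p q : 0 < Cmod (p, q) + p ->
  0 < Cmod (p, q) /\
  (p, q) = (exp (ln (Cmod (p, q))) * cos (Tz k (p, q)), exp (ln (Cmod (p, q))) * sin (Tz k (p, q))) /\
  (2 * IZR k - 1) * PI < Tz k (p, q) < (2 * IZR k + 1) * PI.
Proof.
  intros Hp. unfold Tz. simpl fst; simpl snd.
  set (m := Cmod (p, q)) in *.
  assert (Hm2 : m ^ 2 = p ^ 2 + q ^ 2) by (unfold m; rewrite Cmod2_alt; reflexivity).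
  assert (Hmp : Rabs p <= m) by (unfold m; apply (proj1 (cmod_parts (p, q)))).
  assert (Hm : 0 < m).
  { destruct (Rle_lt_dec m 0); [|assumption]. pose proof (Rabs_pos p).
    apply Rabs_le_between in Hmp. lra. }
  split; [exact Hm|].
  set (u := q / (m + p)).
  pose proof (atan_bound u) as Hab.
  split.
  - rewrite exp_ln by exact Hm. rewrite cos_shift_int, sin_shift_int.
    rewrite cos_2a_cos, sin_2a, cos_atan, sin_atan.
    assert (Hs : 0 < 1 + u ^ 2) by nra.
    assert (Hsq : sqrt (1 + u²) * sqrt (1 + u²) = 1 + u ^ 2).
    { rewrite sqrt_sqrt; [unfold Rsqr; ring| unfold Rsqr; nra]. }
    assert (Hsq0 : 0 < sqrt (1 + u²)) by (apply sqrt_lt_R0; unfold Rsqr; nra).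
    assert (E1 : 1 + u ^ 2 = 2 * m / (m + p)).
    { unfold u. apply Rmult_eq_reg_r with ((m + p) ^ 2); [|nra].
      replace ((1 + (q / (m + p)) ^ 2) * (m + p) ^ 2) with ((m + p) ^ 2 + q ^ 2) by (field; lra).
      replace (2 * m / (m + p) * (m + p) ^ 2) with (2 * m * (m + p)) by (field; lra).
      replace (q ^ 2) with (m ^ 2 - p ^ 2) by lra. ring. }
    f_equal.
    + replace (m * (2 * (1 / sqrt (1 + u²)) * (1 / sqrt (1 + u²)) - 1))
        with (m * (2 / (sqrt (1 + u²) * sqrt (1 + u²)) - 1)) by (field; lra).
      rewrite Hsq, E1. field. lra.
    + replace (m * (2 * (u / sqrt (1 + u²)) * (1 / sqrt (1 + u²))))
        with (m * (2 * u / (sqrt (1 + u²) * sqrt (1 + u²)))) by (field; lra).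
      rewrite Hsq, E1. unfold u. field. lra.
  - split; lra.
Qed.

Lemma LW_noncut k z : 0 < Cmod z + fst z -> exp (-1) < Cmod z ->
  LambertW k z = Wsol (ln (Cmod z)) (Tz k z) /\ fW (Wsol (ln (Cmod z)) (Tz k z)) = z /\
  (2 * IZR k - 1) * PI < Tz k z < (2 * IZR k + 1) * PI.
Proof.
  intros H1 H2. destruct z as [p q].
  destruct (rep_noncut k p q H1) as [Hm [Hr Hi]].
  assert (HL : -1 < ln (Cmod (p, q))).
  { rewrite <- (ln_exp (-1)). apply ln_increasing; [apply exp_pos| exact H2]. }
  set (L := ln (Cmod (p, q))) in *. set (T := Tz k (p, q)) in *.
  split; [|split; [|exact Hi]].
  - rewrite Hr at 1. apply LW_value; [exact HL| lra].
  - rewrite Wsol_f by exact HL. symmetry. exact Hr.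
Qed.

Lemma LW_cut k p : p < - exp (-1) ->
  LambertW k (p, 0) = Wsol (ln (- p)) (PI + 2 * IZR k * PI) /\
  fW (Wsol (ln (- p)) (PI + 2 * IZR k * PI)) = (p, 0).
Proof.
  intros Hp. pose proof PI_RGT_0.
  assert (HL : -1 < ln (- p)).
  { rewrite <- (ln_exp (-1)). apply ln_increasing; [apply exp_pos| lra]. }
  assert (Hr : (p, 0) = (exp (ln (- p)) * cos (PI + 2 * IZR k * PI), exp (ln (- p)) * sin (PI + 2 * IZR k * PI))).
  { rewrite cos_shift_int, sin_shift_int, cos_PI, sin_PI, exp_ln by (pose proof (exp_pos (-1)); lra).
    f_equal; ring. }
  split.
  - rewrite Hr at 1. apply LW_value; [exact HL| lra].
  - rewrite Wsol_f by exact HL. symmetry. exact Hr.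
Qed.

Lemma scal_P (h : R) (b : C) : @scal R_AbsRing (prod_NormedModule R_AbsRing R_NormedModule R_NormedModule) h b = Cmult (RtoC h) b.
Proof. destruct b. unfold scal. simpl. unfold prod_scal, Cmult, RtoC. simpl. unfold scal; simpl. unfold mult; simpl. f_equal; ring. Qed.
Lemma norm_P (a : C) : @norm R_AbsRing (prod_NormedModule R_AbsRing R_NormedModule R_NormedModule) a = Cmod a.
Proof. destruct a. unfold norm. simpl. unfold prod_norm, Cmod. simpl. unfold norm; simpl. unfold abs; simpl. f_equal. rewrite !Rmult_1_r. rewrite <- (Rabs_mult r r), <- (Rabs_mult r0 r0). rewrite (Rabs_right (r*r)), (Rabs_right (r0*r0)) by nra. reflexivity. Qed.

Lemma deriv_noncut k z0 : 0 < Cmod z0 + fst z0 -> 1 <= Cmod z0 -> Cplus 1 (LambertW k z0) <> 0%C ->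
  is_derive (LambertW k) z0 (Cinv (Cmult (cexp (LambertW k z0)) (Cplus 1 (LambertW k z0)))).
Proof.
  intros Hp Hm H1.
  set (FC := @locally (AbsRing_UniformSpace C_AbsRing) z0).
  set (Lz := fun z : C => ln (Cmod z)).
  assert (HLv : -1 < Lz z0).
  { unfold Lz. assert (0 <= ln (Cmod z0)) by (rewrite <- ln_1; apply ln_le; lra). lra. }
  assert (HL : filterlim Lz FC (locally (Lz z0))).
  { apply (flim_cont FC (fun z => Cmod z) ln (Cmod z0) (flim_cmod z0)). apply continuous_ln. lra. }
  assert (HT : filterlim (Tz k) FC (locally (Tz k z0))).
  { unfold Tz.
    apply (flim_plus FC); [|apply filterlim_const].
    apply (flim_mult FC); [apply filterlim_const|].
    apply (flim_cont FC (fun z => snd z / (Cmod z + fst z)) atan); [|apply continuous_atan].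
    apply (flim_mult FC); [apply flim_snd|].
    apply (flim_cont FC (fun z => Cmod z + fst z) Rinv).
    - apply (flim_plus FC); [apply flim_cmod| apply flim_fst].
    - apply cont_R. auto_derive. lra. }
  assert (Ev1 : FC (fun z => 0 < Cmod z + fst z /\ exp (-1) < Cmod z)).
  { pose proof (flim_eps FC _ _ (flim_plus FC _ _ _ _ (flim_cmod z0) (flim_fst z0)) _ Hp) as E1.
    pose proof (flim_eps FC _ _ (flim_cmod z0) (/ 2) ltac:(lra)) as E2.
    generalize (filter_and _ _ E1 E2). apply filter_imp. intros z [A B].
    apply Rabs_def2 in A. apply Rabs_def2 in B. pose proof expm1_half. split; lra. }
  assert (Hz0 : 0 < Cmod z0 + fst z0 /\ exp (-1) < Cmod z0) by (pose proof expm1_half; split; lra).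
  destruct (LW_noncut k z0 (proj1 Hz0) (proj2 Hz0)) as [E3 [E4 _]].
  fold (Lz z0) in E3, E4.
  split; [apply is_linear_scal_l|].
  intros x Hx.
  assert (Hzx : z0 = x) by (apply (@is_filter_lim_locally_unique C_AbsRing (AbsRing_NormedModule C_AbsRing)); exact Hx).
  subst x. intros eps.
  destruct (inv_core (LambertW k z0) H1 eps (cond_pos eps)) as [eta [Heta Hc]].
  pose proof (W_cont FC Lz (Tz k) (Lz z0) (Tz k z0) HLv HL HT eta Heta) as Ev2.
  generalize (filter_and _ _ Ev1 Ev2). apply filter_imp. intros z [[Hz1 Hz2] Hz3].
  destruct (LW_noncut k z Hz1 Hz2) as [E1 [E2 _]]. fold (Lz z) in E1, E2.
  rewrite <- E3 in Hz3.
  assert (E4' : fW (LambertW k z0) = z0) by (rewrite E3; exact E4).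
  specialize (Hc _ Hz3). rewrite E2 in Hc. rewrite E4' in Hc.
  rewrite E1. exact Hc.
Qed.

Lemma Cplus_R0 (z : C) : Cplus z (RtoC 0) = z.
Proof. destruct z. unfold Cplus, RtoC. simpl. f_equal; ring. Qed.

Lemma deriv_cut k z0 : snd z0 = 0 -> fst z0 <= -1 -> Cplus 1 (LambertW k z0) <> 0%C ->
  is_derive (fun h : R => LambertW k (Cplus z0 (RtoC h))) 0
    (Cinv (Cmult (cexp (LambertW k z0)) (Cplus 1 (LambertW k z0)))).
Proof.
  intros Hs Hp H1. destruct z0 as [p q]. simpl in Hs, Hp. subst q.
  set (FR := @locally (AbsRing_UniformSpace R_AbsRing) 0).
  set (Lh := fun h : R => ln (- (p + h))).
  set (T := PI + 2 * IZR k * PI).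
  assert (Ez : forall h, Cplus (p, 0) (RtoC h) = (p + h, 0)).
  { intros h. unfold Cplus, RtoC. simpl. f_equal; ring. }
  assert (HLv : -1 < Lh 0).
  { unfold Lh. rewrite Rplus_0_r. assert (0 <= ln (- p)) by (rewrite <- ln_1; apply ln_le; lra). lra. }
  assert (HL : filterlim Lh FR (locally (Lh 0))).
  { assert (C : continuous Lh 0) by (apply cont_R; unfold Lh; auto_derive; lra). exact C. }
  assert (HT : filterlim (fun _ : R => T) FR (locally T)) by apply filterlim_const.
  assert (Ev1 : FR (fun h => p + h < - exp (-1))).
  { apply filter_imp with (2 := near_R 0 (/ 2) ltac:(lra)). intros h Hh.
    rewrite Rminus_0_r in Hh. apply Rabs_def2 in Hh. pose proof expm1_half. lra. }
  assert (Hz0 : p + 0 < - exp (-1)) by (pose proof expm1_half; lra).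
  destruct (LW_cut k (p + 0) Hz0) as [E3 E4]. fold T in E3, E4.
  assert (E5 : LambertW k (p, 0) = Wsol (Lh 0) T) by (unfold Lh; rewrite <- E3; f_equal; f_equal; ring).
  split; [apply is_linear_scal_l|].
  intros x Hx.
  assert (Hzx : 0 = x) by (apply (@is_filter_lim_locally_unique R_AbsRing (AbsRing_NormedModule R_AbsRing)); exact Hx).
  subst x. intros eps.
  destruct (inv_core (LambertW k (p, 0)) H1 eps (cond_pos eps)) as [eta [Heta Hc]].
  pose proof (W_cont FR Lh (fun _ => T) (Lh 0) T HLv HL HT eta Heta) as Ev2.
  generalize (filter_and _ _ Ev1 Ev2). apply filter_imp. intros h [Hz1 Hz2].
  destruct (LW_cut k (p + h) Hz1) as [E1 E2]. fold T in E1, E2.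
  rewrite <- E5 in Hz2.
  specialize (Hc _ Hz2).
  assert (E2' : fW (Wsol (Lh h) T) = (p + h, 0)) by (unfold Lh; exact E2).
  assert (E6 : fW (LambertW k (p, 0)) = (p, 0)).
  { rewrite E5. unfold Lh. rewrite Rplus_0_r in E4 |- *. exact E4. }
  rewrite E2', E6 in Hc.
  assert (E1' : LambertW k (p + h, 0) = Wsol (Lh h) T) by (unfold Lh; exact E1).
  rewrite norm_P, scal_P. rewrite !Ez. rewrite Rplus_0_r. rewrite E1'.
  assert (E7 : Cminus (p + h, 0) (p, 0) = RtoC (h - 0)).
  { unfold Cminus, Cplus, Copp, RtoC. simpl. f_equal; ring. }
  rewrite E7, Cmod_R in Hc. exact Hc.
Qed.

Lemma LW_repr k z : 1 <= Cmod z -> exists L T, -1 < L /\ exp L = Cmod z /\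
  (2 * IZR k - 1) * PI < T <= (2 * IZR k + 1) * PI /\ LambertW k z = Wsol L T.
Proof.
  intros Hz. pose proof expm1_half.
  destruct (Rlt_or_le 0 (Cmod z + fst z)) as [Hp|Hp].
  - destruct (LW_noncut k z Hp ltac:(lra)) as [E1 [_ Hi]].
    exists (ln (Cmod z)), (Tz k z). repeat split; try lra.
    + rewrite <- (ln_exp (-1)). apply ln_increasing; [apply exp_pos|lra].
    + apply exp_ln. lra.
    + exact E1.
  - destruct z as [p q].
    assert (Hm2 : Cmod (p, q) ^ 2 = p ^ 2 + q ^ 2) by (rewrite Cmod2_alt; reflexivity).
    assert (Hmp : Rabs p <= Cmod (p, q)) by apply (proj1 (cmod_parts (p, q))).
    simpl fst in Hp. apply Rabs_le_between in Hmp.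
    assert (Hq : q = 0) by nra. subst q.
    assert (Ep : Cmod (p, 0) = - p) by lra.
    destruct (LW_cut k p ltac:(lra)) as [E1 _].
    exists (ln (- p)), (PI + 2 * IZR k * PI). pose proof PI_RGT_0. repeat split; try lra.
    + rewrite <- (ln_exp (-1)). apply ln_increasing; [apply exp_pos|lra].
    + rewrite exp_ln by lra. lra.
    + exact E1.
Qed.

Lemma PI_lt_16_5 : PI < 16 / 5.
Proof.
  destruct (Rlt_or_le PI (16 / 5)) as [H|H]; [exact H|exfalso].
  pose proof (cos_ge_0 (8 / 5)) as H1. pose proof PI_RGT_0.
  destruct (pre_cos_bound (8 / 5) 0 ltac:(lra) ltac:(lra)) as [_ H2].
  unfold cos_approx, cos_term in H2. simpl in H2.
  assert (0 <= cos (8 / 5)) by (apply H1; lra). lra.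
Qed.

Lemma exp_half_lb : 13 / 8 <= exp (/ 2).
Proof.
  pose proof (exp_ge_taylor (/ 2) 2 ltac:(lra)) as H. simpl in H. lra.
Qed.

Lemma expmhalf_bounds : / 2 <= exp (- / 2) <= 8 / 13.
Proof.
  rewrite exp_Ropp. pose proof exp_half_lb. pose proof (exp_half (/ 2) ltac:(rewrite Rabs_right; lra)).
  split.
  - apply Rinv_le_contravar; lra.
  - replace (8 / 13) with (/ (13 / 8)) by field. apply Rinv_le_contravar; lra.
Qed.

Theorem theorem5 :
  forall (k : Z) (z : C),
    ((/ 2 + (2 * IZR (Z.abs k) + 1) * PI) * exp (- / 2) <= Cmod z ->
     exists d : C, lw_deriv k z d /\ Cmod d <= / Cmod z) /\
    (4 * (IZR (Z.abs k) + 1) <= Cmod z ->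
     (/ 2 + (2 * IZR (Z.abs k) + 1) * PI) * exp (- / 2) <= Cmod z).
Proof.
  intros k z.
  assert (HK : 0 <= IZR (Z.abs k)) by (apply IZR_le; lia).
  set (K := IZR (Z.abs k)) in *.
  pose proof expmhalf_bounds as [He1 He2]. pose proof PI_lt_16_5. pose proof PI2_3_2.
  split.
  - intros Hz.
    assert (A : 2 <= / 2 + (2 * K + 1) * PI) by nra.
    assert (A2 : 1 <= (/ 2 + (2 * K + 1) * PI) * exp (- / 2))
      by (apply Rle_trans with (2 * / 2); [lra| apply Rmult_le_compat; lra]).
    assert (Hz1 : 1 <= Cmod z) by lra.
    destruct (LW_repr k z Hz1) as [L [T [HL [HeL [HT HW]]]]].
    assert (HTb : Rabs T <= (2 * K + 1) * PI).
    { unfold K. destruct (Z_le_gt_dec 0 k) as [Hk|Hk].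
      - rewrite Z.abs_eq by lia. assert (0 <= IZR k) by (apply IZR_le; lia).
        apply Rabs_le. split; nra.
      - rewrite Z.abs_neq by lia. rewrite opp_IZR. assert (IZR k <= -1) by (apply IZR_le; lia).
        apply Rabs_le. split; nra. }
    rewrite <- HeL in Hz.
    destruct (bound_main L T ((2 * K + 1) * PI) HL ltac:(nra) HTb Hz) as [Hx Hb].
    rewrite <- HW in Hx, Hb. rewrite HeL in Hb.
    assert (H1 : Cplus 1 (LambertW k z) <> 0%C).
    { intros Hc0. assert (Hf : fst (Cplus 1 (LambertW k z)) = 0) by (rewrite Hc0; reflexivity).
      simpl in Hf. lra. }
    exists (Cinv (Cmult (cexp (LambertW k z)) (Cplus 1 (LambertW k z)))). split; [|exact Hb].
    unfold lw_deriv. destruct (excluded_middle_informative (lw_on_cut k z)) as [Hc|Hc].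
    + destruct Hc as [Him Hre]. unfold Im in Him. unfold Re in Hre.
      assert (Hre0 : fst z <= 0).
      { destruct (k =? 0)%Z; [pose proof (exp_pos (-1)); lra| lra]. }
      destruct z as [p q]. simpl in Him, Hre0. subst q.
      assert (Cmod (p, 0) = - p) by (change (p, 0) with (RtoC p); rewrite Cmod_R; apply Rabs_left1; lra).
      apply deriv_cut; [reflexivity| simpl; lra| exact H1].
    + apply deriv_noncut; [| exact Hz1| exact H1].
      destruct (Rlt_or_le 0 (Cmod z + fst z)) as [Hp|Hp]; [exact Hp|exfalso].
      apply Hc. destruct z as [p q].
      assert (Hm2 : Cmod (p, q) ^ 2 = p ^ 2 + q ^ 2) by (rewrite Cmod2_alt; reflexivity).
      assert (Hmp : Rabs p <= Cmod (p, q)) by apply (proj1 (cmod_parts (p, q))).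
      simpl fst in Hp. apply Rabs_le_between in Hmp.
      assert (Hq : q = 0) by nra.
      pose proof expm1_half.
      unfold lw_on_cut, Re, Im. simpl. split; [exact Hq|].
      destruct (k =? 0)%Z; lra.
  - intros Hz. eapply Rle_trans; [|exact Hz].
    apply Rle_trans with ((/ 2 + (2 * K + 1) * (16 / 5)) * (8 / 13)).
    + apply Rmult_le_compat; try nra.
    + nra.
Qed.
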